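(* Let $p=q=3$ and let $\mathcal V_{\mathrm{phys}}$, $\Psi_{lmn}$ and the operators $\hat A_{ij},\hat B_{ij},\hat C_{ij}$ be as in the context. Let $(\cdot,\cdot)$ be an inner product on $\mathcal V_{\mathrm{phys}}$ with respect to which every $\hat A_{ij},\hat B_{ij},\hat C_{ij}$ (acting on $\mathcal V_{\mathrm{phys}}$) is symmetric. Then there is a constant $r>0$ such that $(\Psi_{lmn},\Psi_{l'm'n'})=r(2l+1)\delta_{ll'}\delta_{mm'}\delta_{nn'}$ for all indices.
   Context: On smooth functions of $(\boldsymbol u,\boldsymbol v)\in\mathbb{R}^3\times\mathbb{R}^3$ define $\hat A_{ij}=-i(u_i\partial_{u_j}-u_j\partial_{u_i})$, $\hat B_{ij}=-i(v_i\partial_{v_j}-v_j\partial_{v_i})$, $\hat C_{ij}=u_iv_j+\partial_{u_i}\partial_{v_j}$ for $1\le i,j\le3$. With $u=|\boldsymbol u|$, $v=|\boldsymbol v|$, let $\Psi_{lmn}=j_l(uv)Y_{lm}(\boldsymbol u/u)Y_{ln}(\boldsymbol v/v)$ for integers $l\ge0$, $|m|\le l$, $|n|\le l$, where $j_l$ is the spherical Bessel function of the first kind and $Y_{lm}$ are the standard orthonormal spherical harmonics on $S^2$ (Condon–Shortley phase convention). Let $\mathcal V_{\mathrm{phys}}=\mathrm{span}\{\Psi_{lmn}\}$ (a space invariant under the operators above). *)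

(* Defs.v *)
From Stdlib Require Import Reals ZArith List.
From Coquelicot Require Import Coquelicot.
Open Scope R_scope.

Definition R3 := (R * R * R)%type.
Inductive ax : Type := X1 | X2 | X3.

Definition coord (w : R3) (i : ax) : R :=
  match w with (a, b, c) => match i with X1 => a | X2 => b | X3 => c end end.
Definition upd (w : R3) (i : ax) (t : R) : R3 :=
  match w with (a, b, c) =>
    match i with X1 => (t, b, c) | X2 => (a, t, c) | X3 => (a, b, t) end end.
Definition norm3 (w : R3) : R :=
  match w with (a, b, c) => sqrt (a * a + b * b + c * c) end.
Definition scal3 (s : R) (w : R3) : R3 :=
  match w with (a, b, c) => (s * a, s * b, s * c) end.

Definition PhysFun := R3 -> R3 -> C.

Definition dC (g : R -> C) (t : R) : C :=
  (Derive (fun s => Re (g s)) t, Derive (fun s => Im (g s)) t).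

Definition du (i : ax) (f : PhysFun) : PhysFun :=
  fun u v => dC (fun t => f (upd u i t) v) (coord u i).
Definition dv (i : ax) (f : PhysFun) : PhysFun :=
  fun u v => dC (fun t => f u (upd v i t)) (coord v i).

Definition opA (i j : ax) (f : PhysFun) : PhysFun :=
  fun u v => ((- Ci) * (RtoC (coord u i) * du j f u v - RtoC (coord u j) * du i f u v))%C.
Definition opB (i j : ax) (f : PhysFun) : PhysFun :=
  fun u v => ((- Ci) * (RtoC (coord v i) * dv j f u v - RtoC (coord v j) * dv i f u v))%C.
Definition opC (i j : ax) (f : PhysFun) : PhysFun :=
  fun u v => (RtoC (coord u i * coord v j) * f u v + du i (dv j f) u v)%C.

(* Spherical Bessel function of the first kind, via its power series
   j_l(x) = sum_k (-1)^k x^(l+2k) / (2^k k! (2l+2k+1)!!)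
          = 2^l x^l sum_k (-1)^k (l+k)! x^(2k) / (k! (2l+2k+1)!). *)
Definition sph_bessel_j (l : nat) (x : R) : R :=
  2 ^ l * x ^ l *
  Series (fun k => (-1) ^ k * INR (fact (l + k)) /
                   (INR (fact k) * INR (fact (2 * l + 2 * k + 1))) * x ^ (2 * k)).

(* m-th derivative of the Legendre polynomial P_l (Rodrigues' formula) *)
Definition legendre_deriv (l m : nat) (z : R) : R :=
  Derive_n (fun t => (t ^ 2 - 1) ^ l) (l + m) z / (2 ^ l * INR (fact l)).

Fixpoint Cpow (c : C) (n : nat) : C :=
  match n with O => RtoC 1 | S k => (c * Cpow c k)%C end.

(* Orthonormal spherical harmonics with Condon-Shortley phase, evaluated at a
   unit vector w = (x,y,z) = (sin th cos ph, sin th sin ph, cos th).  For m >= 0,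
   Y_lm = N_lm P_l^m(cos th) e^{i m ph}, with P_l^m(z) = (-1)^m (1-z^2)^{m/2} P_l^(m)(z)
   and N_lm = sqrt((2l+1)/(4 pi) (l-m)!/(l+m)!); since (sin th)^m e^{i m ph} = (x+iy)^m,
   this is N_lm (-1)^m (x+iy)^m P_l^(m)(z). *)
Definition Ylm_nonneg (l m : nat) (w : R3) : C :=
  match w with (x, y, z) =>
    (RtoC (sqrt ((2 * INR l + 1) / (4 * PI) * INR (fact (l - m)) / INR (fact (l + m)))
           * (-1) ^ m * legendre_deriv l m z)
     * Cpow (x, y) m)%C
  end.

Definition Ylm (l : nat) (m : Z) (w : R3) : C :=
  if (0 <=? m)%Z then Ylm_nonneg l (Z.to_nat m) w
  else (RtoC ((-1) ^ Z.abs_nat m) * Cconj (Ylm_nonneg l (Z.abs_nat m) w))%C.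

Definition Psi (l : nat) (m n : Z) : PhysFun :=
  fun u v => (RtoC (sph_bessel_j l (norm3 u * norm3 v))
              * Ylm l m (scal3 (/ norm3 u) u) * Ylm l n (scal3 (/ norm3 v) v))%C.

Definition valid_idx (l : nat) (m n : Z) : Prop :=
  (Z.abs m <= Z.of_nat l)%Z /\ (Z.abs n <= Z.of_nat l)%Z.

Definition in_Vphys (f : PhysFun) : Prop :=
  exists s : list (C * (nat * Z * Z)),
    List.Forall (fun p => match snd p with (l, m, n) => valid_idx l m n end) s /\
    f = (fun u v => fold_right
            (fun p acc => match snd p with (l, m, n) =>
                            (acc + fst p * Psi l m n u v)%C end)
            (RtoC 0) s).

Definition Fadd (f g : PhysFun) : PhysFun := fun u v => (f u v + g u v)%C.
Definition Fscal (c : C) (f : PhysFun) : PhysFun := fun u v => (c * f u v)%C.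
Definition Fzero : PhysFun := fun _ _ => RtoC 0.

Definition is_inner_product_on_Vphys (ip : PhysFun -> PhysFun -> C) : Prop :=
  (forall f g h, in_Vphys f -> in_Vphys g -> in_Vphys h ->
     ip f (Fadd g h) = (ip f g + ip f h)%C) /\
  (forall c f g, in_Vphys f -> in_Vphys g -> ip f (Fscal c g) = (c * ip f g)%C) /\
  (forall f g, in_Vphys f -> in_Vphys g -> ip g f = Cconj (ip f g)) /\
  (forall f, in_Vphys f -> f <> Fzero -> Im (ip f f) = 0 /\ 0 < Re (ip f f)).

Definition symmetric_on_Vphys (ip : PhysFun -> PhysFun -> C) (T : PhysFun -> PhysFun) : Prop :=
  forall f g, in_Vphys f -> in_Vphys g -> ip (T f) g = ip f (T g).

(* Main.v *)
Require Import Defs.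
From Stdlib Require Import Reals ZArith Lia Lra FunctionalExtensionality List.
From Coquelicot Require Import Coquelicot.
Open Scope R_scope.

Lemma is_derive_eq (f : R -> R) (x l l' : R) : is_derive f x l -> l = l' -> is_derive f x l'.
Proof. intros H ->; exact H. Qed.

Lemma isd_const (c t : R) : is_derive (fun _ : R => c) t 0.
Proof. exact (is_derive_const c t). Qed.
Lemma isd_id (t : R) : is_derive (fun s : R => s) t 1.
Proof. exact (is_derive_id t). Qed.

Lemma isd_mult (f g : R -> R) x df dg : is_derive f x df -> is_derive g x dg ->
  is_derive (fun s => f s * g s) x (df * g x + f x * dg).
Proof.
  intros H1 H2. eapply is_derive_eq. apply (is_derive_mult f g x df dg H1 H2).
  intros; apply Rmult_comm. unfold plus, mult; simpl; ring.
Qed.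
Lemma isd_plus (f g : R -> R) x df dg : is_derive f x df -> is_derive g x dg ->
  is_derive (fun s => f s + g s) x (df + dg).
Proof. intros H1 H2. exact (is_derive_plus f g x df dg H1 H2). Qed.
Lemma isd_minus (f g : R -> R) x df dg : is_derive f x df -> is_derive g x dg ->
  is_derive (fun s => f s - g s) x (df - dg).
Proof. intros H1 H2. exact (is_derive_minus f g x df dg H1 H2). Qed.
Lemma isd_opp (f : R -> R) x df : is_derive f x df -> is_derive (fun s => - f s) x (- df).
Proof. intros H1. exact (is_derive_opp f x df H1). Qed.
Lemma isd_comp (f g : R -> R) x df dg : is_derive f (g x) df -> is_derive g x dg ->
  is_derive (fun s => f (g s)) x (dg * df).
Proof. intros H1 H2. exact (is_derive_comp f g x df dg H1 H2). Qed.

Definition CD (g : R -> C) (t : R) (d : C) : Prop :=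
  is_derive (fun s => Re (g s)) t (Re d) /\ is_derive (fun s => Im (g s)) t (Im d).

Lemma CD_dC g t d : CD g t d -> dC g t = d.
Proof.
  intros [H1 H2]. unfold dC.
  rewrite (is_derive_unique (fun s : R => Re (g s)) t (Re d) H1).
  rewrite (is_derive_unique (fun s : R => Im (g s)) t (Im d) H2).
  destruct d; reflexivity.
Qed.

Lemma CD_ext g h t d : (forall s, g s = h s) -> CD g t d -> CD h t d.
Proof.
  intros E [H1 H2]; split.
  - apply (is_derive_ext (fun s => Re (g s))); [intros; now rewrite E|exact H1].
  - apply (is_derive_ext (fun s => Im (g s))); [intros; now rewrite E|exact H2].
Qed.

Lemma CD_eq g t d d' : CD g t d -> d = d' -> CD g t d'.
Proof. intros H ->; exact H. Qed.

Lemma CD_const c t : CD (fun _ => c) t (RtoC 0).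
Proof. split; simpl; apply isd_const. Qed.

Lemma CD_RtoC f t d : is_derive f t d -> CD (fun s => RtoC (f s)) t (RtoC d).
Proof. intros H; split; simpl; [exact H| apply isd_const]. Qed.

Lemma CD_pair f g t a b : is_derive f t a -> is_derive g t b -> CD (fun s => (f s, g s)) t (a, b).
Proof. intros H1 H2; split; simpl; assumption. Qed.

Lemma CD_plus g h t dg dh : CD g t dg -> CD h t dh -> CD (fun s => (g s + h s)%C) t (dg + dh)%C.
Proof.
  intros [G1 G2] [H1 H2]; split; simpl.
  - apply isd_plus; assumption.
  - apply isd_plus; assumption.
Qed.

Lemma CD_mult g h t dg dh : CD g t dg -> CD h t dh ->
  CD (fun s => (g s * h s)%C) t (dg * h t + g t * dh)%C.
Proof.
  intros [G1 G2] [H1 H2]; split.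
  - apply (is_derive_ext (fun s => Re (g s) * Re (h s) - Im (g s) * Im (h s))).
    { intros; unfold Re, Im; simpl; ring. }
    eapply is_derive_eq.
    + apply isd_minus; apply isd_mult; eauto.
    + unfold Re, Im; simpl. ring.
  - apply (is_derive_ext (fun s => Re (g s) * Im (h s) + Im (g s) * Re (h s))).
    { intros; unfold Re, Im; simpl; ring. }
    eapply is_derive_eq.
    + apply isd_plus; apply isd_mult; eauto.
    + unfold Re, Im; simpl. ring.
Qed.

Lemma CD_conj g t d : CD g t d -> CD (fun s => Cconj (g s)) t (Cconj d).
Proof.
  intros [G1 G2]; split; simpl.
  - exact G1.
  - apply isd_opp; exact G2.
Qed.

Lemma CD_scal c g t d : CD g t d -> CD (fun s => (c * g s)%C) t (c * d)%C.
Proof.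
  intros H. eapply CD_eq. apply (CD_mult (fun _ => c) g). apply CD_const. exact H.
  apply injective_projections; simpl; ring.
Qed.

Lemma CD_Cpow g t d n : CD g t d ->
  CD (fun s => Defs.Cpow (g s) n) t (RtoC (INR n) * Defs.Cpow (g t) (pred n) * d)%C.
Proof.
  intros H. induction n.
  - simpl. apply (CD_eq _ _ (RtoC 0)). apply (CD_const (RtoC 1)). 
    apply injective_projections; simpl; ring.
  - change (CD (fun s => (g s * Defs.Cpow (g s) n)%C) t
      (RtoC (INR (S n)) * Defs.Cpow (g t) (pred (S n)) * d)%C).
    
    eapply CD_eq. apply (CD_mult g (fun s => Defs.Cpow (g s) n) t d _ H IHn).
    
    destruct n.
    + simpl. apply injective_projections; simpl; ring.
    + change (pred (S (S n))) with (S n). change (pred (S n)) with n.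
      change (Defs.Cpow (g t) (S n)) with (g t * Defs.Cpow (g t) n)%C.
      
      rewrite (S_INR (S n)). rewrite RtoC_plus. ring.
Qed.

Lemma fact_pos n : 0 < INR (fact n).
Proof. apply lt_0_INR, lt_O_fact. Qed.

Lemma INR_fact_S n : INR (fact (S n)) = INR (S n) * INR (fact n).
Proof. rewrite fact_simpl, mult_INR; reflexivity. Qed.

Definition ab (l k : nat) : R :=
  (-1) ^ k * INR (fact (l + k)) / (INR (fact k) * INR (fact (2 * l + 2 * k + 1))).

Definition hb (l : nat) (y : R) : R := PSeries (ab l) y.

Lemma sbj_eq l x : sph_bessel_j l x = 2 ^ l * x ^ l * hb l (x ^ 2).
Proof.
  unfold sph_bessel_j, hb, PSeries. f_equal. apply Series_ext. intros k.
  unfold ab. rewrite <- pow_mult. reflexivity.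
Qed.


Lemma ab_ratio l n : Rabs (ab l (S n) / ab l n) =
  INR (l + n + 1) / (INR (n + 1) * INR (2 * l + 2 * n + 3) * INR (2 * l + 2 * n + 2)).
Proof.
  unfold ab.
  replace (l + S n)%nat with (S (l + n)) by lia.
  replace (2 * l + 2 * S n + 1)%nat with (S (S (2 * l + 2 * n + 1))) by lia.
  rewrite !INR_fact_S.
  pose proof (fact_pos (l+n)); pose proof (fact_pos n); pose proof (fact_pos (2*l+2*n+1)).
  replace (l + n + 1)%nat with (S (l+n)) by lia.
  replace (n + 1)%nat with (S n) by lia.
  replace (2 * l + 2 * n + 3)%nat with (S (S (2 * l + 2 * n + 1))) by lia.
  replace (2 * l + 2 * n + 2)%nat with (S (2 * l + 2 * n + 1)) by lia.
  set (a := INR (fact (l+n))) in *. set (b := INR (fact n)) in *. set (c := INR (fact (2*l+2*n+1))) in *.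
  assert (HS : forall k, 0 < INR (S k)) by (intros; apply lt_0_INR; lia).
  pose proof (HS (l+n)%nat); pose proof (HS n); pose proof (HS (2*l+2*n+1)%nat); pose proof (HS (S (2*l+2*n+1))).
  replace ((-1) ^ S n * (INR (S (l + n)) * a) /
     (INR (S n) * b * (INR (S (S (2 * l + 2 * n + 1))) * (INR (S (2 * l + 2 * n + 1)) * c))) /
     ((-1) ^ n * a / (b * c)))
  with (- (INR (S (l + n)) / (INR (S n) * INR (S (S (2 * l + 2 * n + 1))) * INR (S (2 * l + 2 * n + 1))))).
  2:{ simpl pow. assert ((-1)^n <> 0) by (apply pow_nonzero; lra). field; repeat split; lra. }
  rewrite Rabs_Ropp, Rabs_pos_eq. reflexivity.
  apply Rlt_le, Rdiv_lt_0_compat; [lra|]. apply Rmult_lt_0_compat; [apply Rmult_lt_0_compat|]; lra.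
Qed.

Lemma ab_nz l n : ab l n <> 0.
Proof.
  unfold ab. pose proof (fact_pos (l+n)); pose proof (fact_pos n); pose proof (fact_pos (2*l+2*n+1)).
  assert ((-1)^n <> 0) by (apply pow_nonzero; lra).
  apply Rmult_integral_contrapositive; split.
  apply Rmult_integral_contrapositive; split; lra.
  apply Rinv_neq_0_compat. nra.
Qed.

Lemma CV_ab l : CV_radius (ab l) = p_infty.
Proof.
  apply CV_radius_infinite_DAlembert. apply ab_nz.
  apply is_lim_seq_le_le with (u := fun _ => 0) (w := fun n => / INR (S n)).
  - intros n. rewrite ab_ratio. split.
    + apply Rlt_le, Rdiv_lt_0_compat; [apply lt_0_INR; lia|].
      repeat apply Rmult_lt_0_compat; apply lt_0_INR; lia.
    + assert (0 < INR (n+1)) by (apply lt_0_INR; lia).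
      assert (1 <= INR (2 * l + 2 * n + 3)) by (apply (le_INR 1); lia).
      assert (INR (l + n + 1) <= INR (2 * l + 2 * n + 2)) by (apply le_INR; lia).
      assert (0 < INR (l + n + 1)) by (apply lt_0_INR; lia).
      replace (INR (S n)) with (INR (n+1)) by (f_equal; lia).
      apply Rle_trans with (INR (l + n + 1) / (INR (n + 1) * INR (l+n+1))).
      * unfold Rdiv. apply Rmult_le_compat_l; [lra|].
        apply Rinv_le_contravar; [nra|].
        rewrite Rmult_assoc. apply Rmult_le_compat_l; [lra|]. nra.
      * right. field. lra.
  - apply is_lim_seq_const.
  - apply (is_lim_seq_incr_1 (fun n => / INR n)).
    replace (Finite 0) with (Rbar_inv p_infty) by reflexivity.
    apply is_lim_seq_inv. apply is_lim_seq_INR. discriminate.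
Qed.

Lemma hb_in l y : Rbar_lt (Rabs y) (CV_radius (ab l)).
Proof. rewrite CV_ab. exact I. Qed.

Lemma ab_deriv l n : PS_derive (ab l) n = - ab (S l) n.
Proof.
  unfold PS_derive, ab.
  replace (l + S n)%nat with (S (l + n)) by lia.
  replace (S l + n)%nat with (S (l + n)) by lia.
  replace (2 * l + 2 * S n + 1)%nat with (2 * S l + 2 * n + 1)%nat by lia.
  rewrite (INR_fact_S n). pose proof (fact_pos n). pose proof (fact_pos (2 * S l + 2 * n + 1)).
  assert (0 < INR (S n)) by (apply lt_0_INR; lia).
  simpl pow. field. lra.
Qed.

Lemma hb_deriv l y : is_derive (hb l) y (- hb (S l) y).
Proof.
  unfold hb. eapply is_derive_eq. apply is_derive_PSeries. apply hb_in.
  rewrite <- PSeries_opp. apply PSeries_ext. intros n. unfold PS_opp.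
  rewrite ab_deriv. reflexivity.
Qed.

Lemma hb_ex l y : ex_pseries (ab l) y.
Proof. apply CV_radius_inside. apply hb_in. Qed.

Lemma ab_rec l n : ab l n + 4 * PS_incr_1 (ab (S (S l))) n = 2 * (2 * INR l + 3) * ab (S l) n.
Proof.
  destruct n as [|n].
  - assert (Z0: PS_incr_1 (ab (S (S l))) 0 = 0) by reflexivity. rewrite Z0.
    unfold ab. rewrite !Nat.add_0_r.
    replace (2 * S l + 1)%nat with (S (S (2 * l + 1))) by lia.
    rewrite !INR_fact_S. pose proof (fact_pos l). pose proof (fact_pos (2*l+1)).
    replace (fact 0) with 1%nat by reflexivity.
    rewrite !S_INR, !plus_INR, !mult_INR. simpl pow.
    assert (0 <= INR l) by apply pos_INR.
    set (F1 := INR (fact l)) in *. set (F2 := INR (fact (2 * l + 1))) in *. simpl INR.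
    field. repeat split; lra.
  - simpl PS_incr_1. unfold ab.
    replace (l + S n)%nat with (S (l + n)) by lia.
    replace (S (S l) + n)%nat with (S (S (l + n))) by lia.
    replace (S l + S n)%nat with (S (S (l + n))) by lia.
    replace (2 * l + 2 * S n + 1)%nat with (S (S (2 * l + 2 * n + 1))) by lia.
    replace (2 * S (S l) + 2 * n + 1)%nat with (S (S (S (S (2 * l + 2 * n + 1))))) by lia.
    replace (2 * S l + 2 * S n + 1)%nat with (S (S (S (S (2 * l + 2 * n + 1))))) by lia.
    rewrite !INR_fact_S. pose proof (fact_pos (l+n)); pose proof (fact_pos n); pose proof (fact_pos (2*l+2*n+1)).
    set (F1 := INR (fact (l+n))) in *. set (F2 := INR (fact n)) in *. set (F3 := INR (fact (2 * l + 2 * n + 1))) in *.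
    rewrite !S_INR, !plus_INR, !mult_INR. simpl INR. simpl pow.
    assert (0 <= INR l) by apply pos_INR. assert (0 <= INR n) by apply pos_INR.
    field. repeat split; lra.
Qed.

Lemma hb_rec l y : hb l y + 4 * y * hb (S (S l)) y = 2 * (2 * INR l + 3) * hb (S l) y.
Proof.
  unfold hb. rewrite Rmult_assoc, <- PSeries_incr_1, <- PSeries_scal, <- PSeries_plus.
  - rewrite <- PSeries_scal. apply PSeries_ext. intros n. unfold PS_plus, PS_scal.
    unfold plus, scal; simpl. unfold mult; simpl. rewrite <- ab_rec. reflexivity.
  - apply hb_ex.
  - apply CV_radius_inside. rewrite CV_radius_scal, CV_radius_incr_1. rewrite CV_ab. exact I.
    lra.
Qed.

Lemma hb_0 l : hb l 0 = ab l 0.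
Proof. unfold hb. apply PSeries_0. Qed.

Definition qL (L : nat) (t : R) : R := (t ^ 2 - 1) ^ L.
Definition DL (L k : nat) (t : R) : R := Derive_n (fun t => (t ^ 2 - 1) ^ L) k t.
Definition cL (L j : nat) : R := Binomial.C L j * (-1) ^ (L - j).

Lemma qL_sum L t : (t ^ 2 - 1) ^ L = sum_n (fun j => cL L j * t ^ (2 * j)) L.
Proof.
  rewrite sum_n_Reals. replace (t ^ 2 - 1) with (t ^ 2 + -1) by ring.
  rewrite binomial. apply sum_eq. intros i _. unfold cL. rewrite pow_mult. ring.
Qed.

Lemma ex_pow_scal c p k t : ex_derive_n (fun y => c * y ^ p) k t.
Proof.
  destruct k as [|k]. exact I.
  destruct (le_lt_dec (S k) p).
  - eexists. apply (is_derive_n_scal_l (fun y => y ^ p) (S k)). apply is_derive_n_pow_smalli; auto.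
  - eexists. apply (is_derive_n_scal_l (fun y => y ^ p) (S k)). apply is_derive_n_pow_bigi; auto.
Qed.

Lemma DL_sum L k t : is_derive_n (fun t => (t ^ 2 - 1) ^ L) k t
  (sum_n (fun j => cL L j * Derive_n (fun x => x ^ (2 * j)) k t) L).
Proof.
  apply (is_derive_n_ext (fun y => sum_n (fun j => cL L j * y ^ (2 * j)) L)).
  { intros; symmetry; apply qL_sum. }
  eapply (is_derive_n_ext _ _ k t).
  { intros; reflexivity. }
  replace (sum_n (fun j => cL L j * Derive_n (fun x => x ^ (2 * j)) k t) L)
    with (sum_n (fun j => Derive_n (fun y => cL L j * y ^ (2 * j)) k t) L).
  - apply (is_derive_n_sum_n L (fun j y => cL L j * y ^ (2 * j)) k t).
    apply filter_forall. intros y l j _ _. apply ex_pow_scal.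
  - apply sum_n_ext. intros j. apply Derive_n_scal_l.
Qed.

Lemma DL_ex L k t : ex_derive_n (fun t => (t ^ 2 - 1) ^ L) k t.
Proof.
  destruct k as [|k]. exact I.
  eexists. exact (DL_sum L (S k) t).
Qed.

Lemma DL_deriv L k t : is_derive (DL L k) t (DL L (S k) t).
Proof.
  unfold DL. exact (Derive_n_correct _ (S k) t (DL_ex L (S k) t)).
Qed.

Lemma DL_val L k t : DL L k t = sum_n (fun j => cL L j * Derive_n (fun x => x ^ (2 * j)) k t) L.
Proof. unfold DL. apply is_derive_n_unique. apply DL_sum. Qed.

Lemma sumR_Sn (a : nat -> R) n : sum_n a (S n) = sum_n a n + a (S n).
Proof. rewrite sum_Sn. reflexivity. Qed.

Lemma sum_n_zero (a : nat -> R) n : (forall j, (j <= n)%nat -> a j = 0) -> sum_n a n = 0.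
Proof.
  induction n; intros H.
  - rewrite sum_O. apply H; lia.
  - rewrite sumR_Sn, IHn. rewrite (H (S n)) by lia. lra.
    intros; apply H; lia.
Qed.

Lemma DL_top0 L t : DL L (S (2 * L)) t = 0.
Proof.
  rewrite DL_val. apply sum_n_zero. intros j Hj.
  rewrite Derive_n_pow_bigi by lia. ring.
Qed.

Lemma DL_top L t : DL L (2 * L) t = INR (fact (2 * L)).
Proof.
  rewrite DL_val. destruct L as [|L].
  - rewrite sum_O. unfold cL. rewrite C_n_n. simpl. ring.
  - rewrite sumR_Sn, sum_n_zero.
    + rewrite Derive_n_pow_smalli by lia.
      unfold cL. rewrite C_n_n. rewrite !Nat.sub_diag.
      replace (fact 0) with 1%nat by reflexivity. change (INR 1) with 1. simpl pow. field.
    + intros j Hj. rewrite Derive_n_pow_bigi by lia. ring.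
Qed.

Lemma DL_top1 l t : DL (S l) (S (2 * l)) t = INR (fact (2 * l + 2)) * t.
Proof.
  rewrite DL_val. rewrite sumR_Sn, sum_n_zero.
  + rewrite Derive_n_pow_smalli by lia.
    unfold cL. rewrite C_n_n. rewrite Nat.sub_diag.
    replace (2 * S l - S (2 * l))%nat with 1%nat by lia.
    replace (2 * S l)%nat with (2 * l + 2)%nat by lia.
    replace (fact 1) with 1%nat by reflexivity. change (INR 1) with 1. simpl pow. field.
  + intros j Hj. rewrite Derive_n_pow_bigi by lia. ring.
Qed.

Lemma C_Sn_n n : Binomial.C (S n) n = INR (S n).
Proof.
  unfold Binomial.C. replace (S n - n)%nat with 1%nat by lia.
  rewrite INR_fact_S. replace (fact 1) with 1%nat by reflexivity. pose proof (fact_pos n).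
  set (F := INR (fact n)) in *. simpl INR. field. lra.
Qed.

Lemma DL_top2 l t : DL (S (S l)) (2 * l + 2) t =
  INR (S (S l)) * INR (fact (2 * l + 2)) * ((2 * INR l + 3) * t ^ 2 - 1).
Proof.
  rewrite DL_val. rewrite sumR_Sn, sumR_Sn, sum_n_zero.
  + rewrite !Derive_n_pow_smalli by lia.
    unfold cL. rewrite C_n_n, C_Sn_n. rewrite Nat.sub_diag.
    replace (S (S l) - S l)%nat with 1%nat by lia.
    replace (2 * S l - (2 * l + 2))%nat with 0%nat by lia.
    replace (2 * S (S l) - (2 * l + 2))%nat with 2%nat by lia.
    replace (2 * S (S l))%nat with (S (S (2 * l + 2))) by lia.
    replace (2 * S l)%nat with (2 * l + 2)%nat by lia.
    rewrite !INR_fact_S. pose proof (fact_pos (2*l+2)).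
    replace (fact 0) with 1%nat by reflexivity. replace (fact 2) with 2%nat by reflexivity.
    set (F := INR (fact (2 * l + 2))) in *.
    rewrite !S_INR, plus_INR, mult_INR. simpl INR. simpl pow. field.
  + intros j Hj. rewrite Derive_n_pow_bigi by lia. ring.
Qed.

Lemma DL_ode0 L t : (t ^ 2 - 1) * DL L 1 t - 2 * INR L * t * DL L 0 t = 0.
Proof.
  unfold DL. change (Derive_n ?f 1 t) with (Derive f t). change (Derive_n ?f 0 t) with (f t).
  assert (H : is_derive (fun t => (t^2-1)^L) t (INR L * (t^2-1)^(pred L) * (2*t))).
  { auto_derive; [trivial|]. replace (t * (t * 1) + - (1)) with (t ^ 2 - 1) by ring. ring. }
  rewrite (is_derive_unique (fun t : R => (t ^ 2 - 1) ^ L) t _ H).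
  destruct L as [|L]. simpl. ring. simpl pred. rewrite S_INR. simpl pow. ring.
Qed.

Lemma is_derive_zero_fun (f : R -> R) t l : (forall s, f s = 0) -> is_derive f t l -> l = 0.
Proof.
  intros Hf Hd. assert (H2 : is_derive (fun _ : R => 0) t l).
  { apply (is_derive_ext f); auto. }
  pose proof (is_derive_unique _ _ _ H2). rewrite Derive_const in H. auto.
Qed.

Lemma DL_ode L N t : (t ^ 2 - 1) * DL L (S N) t - 2 * (INR L - INR N) * t * DL L N t
   - INR N * (2 * INR L - INR N + 1) * DL L (pred N) t = 0.
Proof.
  revert t. induction N; intros t.
  - simpl INR. pose proof (DL_ode0 L t). lra.
  - set (F := fun s => (s ^ 2 - 1) * DL L (S N) s - 2 * (INR L - INR N) * s * DL L N s
       - INR N * (2 * INR L - INR N + 1) * DL L (pred N) s).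
    assert (Hd : is_derive F t
      (2 * t * DL L (S N) t + (t ^ 2 - 1) * DL L (S (S N)) t
       - 2 * (INR L - INR N) * (DL L N t + t * DL L (S N) t)
       - INR N * (2 * INR L - INR N + 1) * DL L (S (pred N)) t)).
    { assert (Hq : is_derive (fun s : R => s ^ 2 - 1) t (2 * t)).
      { auto_derive; [trivial| ring]. }
      assert (Hl : is_derive (fun s : R => 2 * (INR L - INR N) * s) t (2 * (INR L - INR N))).
      { auto_derive; [trivial| ring]. }
      unfold F. eapply is_derive_eq.
      apply isd_minus; [apply isd_minus|].
      - apply isd_mult. apply Hq. apply DL_deriv.
      - apply isd_mult. apply Hl. apply DL_deriv.
      - apply isd_mult. apply isd_const. apply DL_deriv.
      - cbv beta. ring. }
    pose proof (is_derive_zero_fun F t _ IHN Hd) as E.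
    destruct N as [|N].
    + simpl in *. lra.
    + simpl pred in *. rewrite !S_INR in *. lra.
Qed.

Definition axeqb (i k : ax) : bool :=
  match i, k with X1, X1 | X2, X2 | X3, X3 => true | _, _ => false end.
Definition delta (i k : ax) : R := if axeqb i k then 1 else 0.

Definition q3 (u : R3) : R :=
  coord u X1 * coord u X1 + coord u X2 * coord u X2 + coord u X3 * coord u X3.

Lemma norm3_q3 u : norm3 u = sqrt (q3 u).
Proof. destruct u as [[a b] c]; reflexivity. Qed.

Lemma q3_nonneg u : 0 <= q3 u.
Proof. unfold q3. nra. Qed.

Lemma upd_same u k : upd u k (coord u k) = u.
Proof. destruct u as [[a b] c]; destruct k; reflexivity. Qed.

Lemma coord_upd_same u k t : coord (upd u k t) k = t.
Proof. destruct u as [[a b] c]; destruct k; reflexivity. Qed.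

Lemma isd_sqrt x : 0 < x -> is_derive sqrt x (/ (2 * sqrt x)).
Proof. intros H. auto_derive. exact H. field. apply Rgt_not_eq, sqrt_lt_R0, H. Qed.

Lemma isd_inv x : x <> 0 -> is_derive Rinv x (- / (x * x)).
Proof. intros H. auto_derive. exact H. field. exact H. Qed.

Lemma path_coord u k i t0 : is_derive (fun t => coord (upd u k t) i) t0 (delta i k).
Proof.
  destruct u as [[a b] c]; destruct i, k; unfold delta; simpl;
  first [apply isd_id | apply isd_const].
Qed.

Lemma path_q u k t0 : is_derive (fun t => q3 (upd u k t)) t0 (2 * t0).
Proof.
  destruct u as [[a b] c]; destruct k; unfold q3; simpl; auto_derive; auto; ring.
Qed.

Lemma path_norm u k : 0 < q3 u ->
  is_derive (fun t => norm3 (upd u k t)) (coord u k) (coord u k / norm3 u).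
Proof.
  intros H.
  apply (is_derive_ext (fun t => sqrt (q3 (upd u k t)))).
  { intros; symmetry; apply norm3_q3. }
  eapply is_derive_eq. apply (isd_comp sqrt (fun t => q3 (upd u k t))).
  - cbv beta. rewrite upd_same. apply isd_sqrt. exact H.
  - apply path_q.
  - rewrite norm3_q3. field. apply Rgt_not_eq, sqrt_lt_R0, H.
Qed.

Definition xh (u : R3) (i : ax) : R := / norm3 u * coord u i.
Definition dxh (u : R3) (i k : ax) : R := (delta i k - xh u i * xh u k) / norm3 u.

Lemma norm3_pos u : 0 < q3 u -> 0 < norm3 u.
Proof. intros H; rewrite norm3_q3; apply sqrt_lt_R0, H. Qed.

Lemma path_xh u k i : 0 < q3 u ->
  is_derive (fun t => xh (upd u k t) i) (coord u k) (dxh u i k).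
Proof.
  intros H. pose proof (norm3_pos u H) as Hr. unfold xh.
  eapply is_derive_eq.
  apply (isd_mult (fun t => / norm3 (upd u k t)) (fun t => coord (upd u k t) i)).
  - apply (isd_comp Rinv (fun t => norm3 (upd u k t))).
    + cbv beta. rewrite upd_same. apply isd_inv. lra.
    + apply path_norm. exact H.
  - apply path_coord.
  - rewrite upd_same. unfold dxh, xh. field. lra.
Qed.

Lemma xh_upd_same u k i : xh (upd u k (coord u k)) i = xh u i.
Proof. rewrite upd_same; reflexivity. Qed.

Lemma xh_norm u : 0 < q3 u -> xh u X1 * xh u X1 + xh u X2 * xh u X2 + xh u X3 * xh u X3 = 1.
Proof.
  intros H. pose proof (norm3_pos u H) as Hr. unfold xh.
  assert (E : norm3 u * norm3 u = q3 u) by (rewrite norm3_q3; apply sqrt_sqrt; lra).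
  transitivity (q3 u / (norm3 u * norm3 u)). unfold q3; field; lra.
  rewrite E. field. lra.
Qed.

Lemma coord_xh u i : 0 < q3 u -> coord u i = norm3 u * xh u i.
Proof. intros H. pose proof (norm3_pos u H). unfold xh. field. lra. Qed.

Definition NK (l m : nat) : R :=
  sqrt ((2 * INR l + 1) / (4 * PI) * INR (fact (l - m)) / INR (fact (l + m))).

Lemma Ynn_hat l m u : Ylm_nonneg l m (scal3 (/ norm3 u) u) =
  (RtoC (NK l m * (-1) ^ m * legendre_deriv l m (xh u X3)) *
   Defs.Cpow (xh u X1, xh u X2) m)%C.
Proof. destruct u as [[a b] c]; reflexivity. Qed.

Lemma legendre_deriv_d l m (z : R) : is_derive (legendre_deriv l m) z (legendre_deriv l (S m) z).
Proof.
  unfold legendre_deriv.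
  apply (is_derive_ext (fun z => DL l (l + m) z * / (2 ^ l * INR (fact l)))).
  { intros; reflexivity. }
  eapply is_derive_eq. apply isd_mult. apply DL_deriv. apply isd_const.
  rewrite Nat.add_succ_r. unfold DL. rewrite Rmult_0_r, Rplus_0_r. reflexivity.
Qed.

Definition dYnn (l m : nat) (u : R3) (k : ax) : C :=
  (RtoC (NK l m * (-1) ^ m) *
   (RtoC (legendre_deriv l (S m) (xh u X3) * dxh u X3 k) * Defs.Cpow (xh u X1, xh u X2) m
    + RtoC (legendre_deriv l m (xh u X3)) *
      (RtoC (INR m) * Defs.Cpow (xh u X1, xh u X2) (pred m) * (dxh u X1 k, dxh u X2 k))))%C.

Lemma CD_Ynn l m u k : 0 < q3 u ->
  CD (fun t => Ylm_nonneg l m (scal3 (/ norm3 (upd u k t)) (upd u k t))) (coord u k) (dYnn l m u k).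
Proof.
  intros H.
  apply (CD_ext (fun t => (RtoC (NK l m * (-1) ^ m) *
     (RtoC (legendre_deriv l m (xh (upd u k t) X3)) *
      Defs.Cpow (xh (upd u k t) X1, xh (upd u k t) X2) m))%C)).
  { intros t. rewrite Ynn_hat. rewrite RtoC_mult. rewrite <- !RtoC_mult.
    rewrite !RtoC_mult. ring. }
  apply (CD_eq _ _ (RtoC (NK l m * (-1) ^ m) *
     (RtoC (legendre_deriv l (S m) (xh u X3) * dxh u X3 k) * Defs.Cpow (xh u X1, xh u X2) m
      + RtoC (legendre_deriv l m (xh u X3)) *
        (RtoC (INR m) * Defs.Cpow (xh u X1, xh u X2) (pred m) * (dxh u X1 k, dxh u X2 k))))%C).
  2:{ reflexivity. }
  apply CD_scal.
  pose proof (CD_mult (fun t => RtoC (legendre_deriv l m (xh (upd u k t) X3)))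
     (fun t => Defs.Cpow (xh (upd u k t) X1, xh (upd u k t) X2) m) (coord u k)
     (RtoC (legendre_deriv l (S m) (xh u X3) * dxh u X3 k))
     (RtoC (INR m) * Defs.Cpow (xh u X1, xh u X2) (pred m) * (dxh u X1 k, dxh u X2 k))%C) as HM.
  cbv beta in HM. rewrite !xh_upd_same in HM. apply HM.
  - apply CD_RtoC. eapply is_derive_eq.
    apply (isd_comp (legendre_deriv l m) (fun t => xh (upd u k t) X3)).
    + cbv beta. rewrite xh_upd_same. apply legendre_deriv_d.
    + apply path_xh. exact H.
    + apply Rmult_comm.
  - pose proof (CD_Cpow (fun t => (xh (upd u k t) X1, xh (upd u k t) X2)) (coord u k)
       (dxh u X1 k, dxh u X2 k) m) as HC.
    cbv beta in HC. rewrite !xh_upd_same in HC. apply HC.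
    apply CD_pair; apply path_xh; exact H.
Qed.

Definition opAd (u : R3) (i j : ax) (d : ax -> C) : C :=
  ((- Ci) * (RtoC (coord u i) * d j - RtoC (coord u j) * d i))%C.
Definition Lpd u d := (opAd u X2 X3 d + Ci * opAd u X3 X1 d)%C.
Definition Lmd u d := (opAd u X2 X3 d + (- Ci) * opAd u X3 X1 d)%C.

Ltac prep_ang l m u H :=
  unfold Lpd, Lmd, opAd, dYnn, dxh;
  rewrite !(coord_xh u _ H);
  unfold delta; simpl axeqb; cbv iota;
  pose proof (norm3_pos u H) as Hr;
  set (x1 := xh u X1) in *; set (x2 := xh u X2) in *; set (x3 := xh u X3) in *;
  set (r := norm3 u) in *;
  set (P' := legendre_deriv l (S m) x3) in *; set (P := legendre_deriv l m x3) in *.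

Lemma ang_Lz l m u : 0 < q3 u ->
  opAd u X1 X2 (dYnn l m u) = (RtoC (INR m) * Ylm_nonneg l m (scal3 (/ norm3 u) u))%C.
Proof.
  intros H. rewrite Ynn_hat. prep_ang l m u H.
  set (K := NK l m * (-1) ^ m).
  destruct m as [|m].
  - simpl Defs.Cpow. simpl pred. change (INR 0) with 0.
    apply injective_projections; simpl; field; lra.
  - simpl pred. change (Defs.Cpow (x1, x2) (S m)) with ((x1, x2) * Defs.Cpow (x1, x2) m)%C.
    destruct (Defs.Cpow (x1, x2) m) as [b1 b2].
    set (M := INR (S m)).
    apply injective_projections; simpl; field; lra.
Qed.

Lemma ang_Lp l m u : 0 < q3 u ->
  Lpd u (dYnn l m u) = (- RtoC (NK l m * (-1) ^ m * legendre_deriv l (S m) (xh u X3)) *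
     Defs.Cpow (xh u X1, xh u X2) (S m))%C.
Proof.
  intros H. prep_ang l m u H.
  set (K := NK l m * (-1) ^ m).
  change (Defs.Cpow (x1, x2) (S m)) with ((x1, x2) * Defs.Cpow (x1, x2) m)%C.
  destruct m as [|m].
  - simpl Defs.Cpow. simpl pred. change (INR 0) with 0.
    apply injective_projections; simpl; field; lra.
  - simpl pred. change (Defs.Cpow (x1, x2) (S m)) with ((x1, x2) * Defs.Cpow (x1, x2) m)%C.
    destruct (Defs.Cpow (x1, x2) m) as [b1 b2].
    set (M := INR (S m)).
    apply injective_projections; simpl; field; lra.
Qed.

Lemma ang_Lm l m u : 0 < q3 u ->
  Lmd u (dYnn l m u) = (RtoC (NK l m * (-1) ^ m) *
    (RtoC (legendre_deriv l (S m) (xh u X3)) * Defs.Cpow (xh u X1, xh u X2) m * Cconj (xh u X1, xh u X2)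
     - RtoC (2 * INR m * xh u X3 * legendre_deriv l m (xh u X3)) * Defs.Cpow (xh u X1, xh u X2) (pred m)))%C.
Proof.
  intros H. prep_ang l m u H.
  set (K := NK l m * (-1) ^ m).
  destruct m as [|m].
  - simpl Defs.Cpow. simpl pred. change (INR 0) with 0.
    apply injective_projections; simpl; field; lra.
  - simpl pred. change (Defs.Cpow (x1, x2) (S m)) with ((x1, x2) * Defs.Cpow (x1, x2) m)%C.
    destruct (Defs.Cpow (x1, x2) m) as [b1 b2].
    set (M := INR (S m)).
    apply injective_projections; simpl; field; lra.
Qed.

Definition cpn (l k : nat) : R := sqrt (INR ((l - k) * (l + k + 1))).
Definition cp (l : nat) (m : Z) : R := sqrt (IZR ((Z.of_nat l - m) * (Z.of_nat l + m + 1))).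

Definition Ynn (l k : nat) (u : R3) : C := Ylm_nonneg l k (scal3 (/ norm3 u) u).

Lemma NK_rel l k : (k < l)%nat -> NK l k = cpn l k * NK l (S k).
Proof.
  intros Hk. unfold NK, cpn. rewrite <- sqrt_mult.
  2:{ apply pos_INR. }
  2:{ apply Rmult_le_pos; [apply Rmult_le_pos|].
      - apply Rdiv_le_0_compat. pose proof (pos_INR l); lra. pose proof PI_RGT_0; lra.
      - apply pos_INR.
      - apply Rlt_le, Rinv_0_lt_compat, fact_pos. }
  f_equal.
  replace (l - k)%nat with (S (l - S k)) by lia.
  replace (l + S k)%nat with (S (l + k)) by lia.
  rewrite !INR_fact_S. pose proof (fact_pos (l - S k)). pose proof (fact_pos (l + k)).
  pose proof PI_RGT_0.
  replace (S (l - S k) * (l + k + 1))%nat with (S (l - S k) * S (l + k))%nat by lia.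
  rewrite mult_INR.
  assert (0 < INR (S (l+k))) by (apply lt_0_INR; lia).
  field. repeat split; lra.
Qed.

Lemma cpn_sq l k : (k <= l)%nat -> cpn l k * cpn l k = INR (l - k) * INR (l + k + 1).
Proof. intros. unfold cpn. rewrite sqrt_sqrt by apply pos_INR. apply mult_INR. Qed.

Lemma legendre_top0 l z : legendre_deriv l (S l) z = 0.
Proof.
  unfold legendre_deriv. replace (l + S l)%nat with (S (2 * l)) by lia.
  change (Derive_n (fun t => (t ^ 2 - 1) ^ l) (S (2 * l)) z) with (DL l (S (2 * l)) z).
  rewrite DL_top0. unfold Rdiv. ring.
Qed.

Lemma Nat_Lp l k u : 0 < q3 u -> (k < l)%nat ->
  Lpd u (dYnn l k u) = (RtoC (cpn l k) * Ynn l (S k) u)%C.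
Proof.
  intros H Hk. rewrite ang_Lp by exact H. unfold Ynn. rewrite Ynn_hat.
  rewrite (NK_rel l k Hk). simpl pow.
  apply injective_projections; simpl; ring.
Qed.

Lemma Nat_Lp_top l u : 0 < q3 u -> Lpd u (dYnn l l u) = RtoC 0.
Proof.
  intros H. rewrite ang_Lp by exact H. rewrite legendre_top0.
  apply injective_projections; simpl; ring.
Qed.

Lemma legendre_ode l j z : (j < l)%nat ->
  (1 - z * z) * legendre_deriv l (S (S j)) z - 2 * INR (S j) * z * legendre_deriv l (S j) z
  = - (INR (l - j) * INR (l + j + 1)) * legendre_deriv l j z.
Proof.
  intros Hj. unfold legendre_deriv.
  pose proof (DL_ode l (S (l + j)) z) as E.
  replace (pred (S (l + j))) with (l + j)%nat in E by reflexivity.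
  unfold DL in E.
  replace (l + S (S j))%nat with (S (S (l + j))) by lia.
  replace (l + S j)%nat with (S (l + j)) by lia.
  set (D2 := Derive_n (fun t => (t ^ 2 - 1) ^ l) (S (S (l + j))) z) in *.
  set (D1 := Derive_n (fun t => (t ^ 2 - 1) ^ l) (S (l + j)) z) in *.
  set (D0 := Derive_n (fun t => (t ^ 2 - 1) ^ l) (l + j) z) in *.
  assert (Hc : 0 < 2 ^ l * INR (fact l)) by (apply Rmult_lt_0_compat; [apply pow_lt; lra| apply fact_pos]).
  set (c := 2 ^ l * INR (fact l)) in *.
  replace ((1 - z * z) * (D2 / c) - 2 * INR (S j) * z * (D1 / c))
    with (((1 - z * z) * D2 - 2 * INR (S j) * z * D1) / c) by (field; lra).
  replace (- (INR (l - j) * INR (l + j + 1)) * (D0 / c))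
    with ((- (INR (l - j) * INR (l + j + 1)) * D0) / c) by (field; lra).
  f_equal.
  rewrite minus_INR by lia. rewrite !plus_INR in *. rewrite !S_INR in *. rewrite plus_INR in E.
  simpl pow in E. change (INR 0) with 0. first [lra | nra].
Qed.

Lemma Nat_Lm l j u : 0 < q3 u -> (j < l)%nat ->
  Lmd u (dYnn l (S j) u) = (RtoC (cpn l j) * Ynn l j u)%C.
Proof.
  intros H Hj. rewrite ang_Lm by exact H. unfold Ynn. rewrite Ynn_hat.
  pose proof (xh_norm u H) as HN.
  pose proof (legendre_ode l j (xh u X3) Hj) as E.
  rewrite (NK_rel l j Hj).
  pose proof (cpn_sq l j (Nat.lt_le_incl _ _ Hj)) as Hc.
  set (x1 := xh u X1) in *; set (x2 := xh u X2) in *; set (x3 := xh u X3) in *.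
  set (P2 := legendre_deriv l (S (S j)) x3) in *.
  set (P1 := legendre_deriv l (S j) x3) in *.
  set (P0 := legendre_deriv l j x3) in *.
  set (c := cpn l j) in *. set (N := NK l (S j)) in *.
  change (Defs.Cpow (x1, x2) (S j)) with ((x1, x2) * Defs.Cpow (x1, x2) j)%C.
  simpl pred. destruct (Defs.Cpow (x1, x2) j) as [b1 b2].
  set (sj := INR (S j)) in *. set (pp := (-1) ^ j).
  assert (K : (x1 * x1 + x2 * x2) * P2 = 2 * sj * x3 * P1 - c * c * P0).
  { rewrite Hc. assert (E3 : x1 * x1 + x2 * x2 = 1 - x3 * x3) by lra. rewrite E3. lra. }
  simpl pow. fold pp.
  apply injective_projections; simpl.
  - transitivity (- N * pp * b1 * ((x1 * x1 + x2 * x2) * P2 - 2 * sj * x3 * P1 + c * c * P0)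
       + c * c * N * pp * P0 * b1); [ring|]. rewrite K. ring.
  - transitivity (- N * pp * b2 * ((x1 * x1 + x2 * x2) * P2 - 2 * sj * x3 * P1 + c * c * P0)
       + c * c * N * pp * P0 * b2); [ring|]. rewrite K. ring.
Qed.


Ltac cdestr d := destruct (d X1) as [a1 a2]; destruct (d X2) as [b1 b2]; destruct (d X3) as [c1 c2].

Lemma Lpd_conj u d : Lpd u (fun k => Cconj (d k)) = (- Cconj (Lmd u d))%C.
Proof. unfold Lpd, Lmd, opAd. cdestr d. apply injective_projections; simpl; ring. Qed.
Lemma Lmd_conj u d : Lmd u (fun k => Cconj (d k)) = (- Cconj (Lpd u d))%C.
Proof. unfold Lpd, Lmd, opAd. cdestr d. apply injective_projections; simpl; ring. Qed.
Lemma Lz_conj u d : opAd u X1 X2 (fun k => Cconj (d k)) = (- Cconj (opAd u X1 X2 d))%C.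
Proof. unfold opAd. cdestr d. apply injective_projections; simpl; ring. Qed.
Lemma Lpd_scal u c d : Lpd u (fun k => c * d k)%C = (c * Lpd u d)%C.
Proof. unfold Lpd, opAd. ring. Qed.
Lemma Lmd_scal u c d : Lmd u (fun k => c * d k)%C = (c * Lmd u d)%C.
Proof. unfold Lmd, opAd. ring. Qed.
Lemma Lz_scal u c d : opAd u X1 X2 (fun k => c * d k)%C = (c * opAd u X1 X2 d)%C.
Proof. unfold opAd. ring. Qed.

Lemma Ylm_pos l k w : Ylm l (Z.of_nat k) w = Ylm_nonneg l k w.
Proof.
  unfold Ylm. replace (0 <=? Z.of_nat k)%Z with true by (symmetry; apply Z.leb_le; lia).
  rewrite Nat2Z.id. reflexivity.
Qed.

Lemma Ylm_neg l k w : Ylm l (- Z.of_nat k) w = (RtoC ((-1) ^ k) * Cconj (Ylm_nonneg l k w))%C.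
Proof.
  destruct k as [|k].
  - simpl. unfold Ylm. simpl. destruct w as [[x y] z]. simpl.
    apply injective_projections; simpl; ring.
  - unfold Ylm. replace (0 <=? - Z.of_nat (S k))%Z with false by (symmetry; apply Z.leb_gt; lia).
    replace (Z.abs_nat (- Z.of_nat (S k))) with (S k) by lia. reflexivity.
Qed.

Definition dYZ (l : nat) (m : Z) (u : R3) (k : ax) : C :=
  if (0 <=? m)%Z then dYnn l (Z.to_nat m) u k
  else (RtoC ((-1) ^ Z.abs_nat m) * Cconj (dYnn l (Z.abs_nat m) u k))%C.

Definition Yu (l : nat) (m : Z) (u : R3) : C := Ylm l m (scal3 (/ norm3 u) u).

Lemma CD_YZ l m u k : 0 < q3 u ->
  CD (fun t => Yu l m (upd u k t)) (coord u k) (dYZ l m u k).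
Proof.
  intros H. unfold Yu, dYZ, Ylm. destruct (0 <=? m)%Z.
  - apply CD_Ynn; exact H.
  - apply CD_scal. apply CD_conj. apply CD_Ynn; exact H.
Qed.

Lemma dYZ_pos l k u : dYZ l (Z.of_nat k) u = dYnn l k u.
Proof.
  apply functional_extensionality; intros kk. unfold dYZ.
  replace (0 <=? Z.of_nat k)%Z with true by (symmetry; apply Z.leb_le; lia).
  rewrite Nat2Z.id. reflexivity.
Qed.

Lemma dYZ_neg l k u : dYZ l (- Z.of_nat (S k)) u = (fun kk => RtoC ((-1) ^ S k) * Cconj (dYnn l (S k) u kk))%C.
Proof.
  apply functional_extensionality; intros kk. unfold dYZ.
  replace (0 <=? - Z.of_nat (S k))%Z with false by (symmetry; apply Z.leb_gt; lia).
  replace (Z.abs_nat (- Z.of_nat (S k))) with (S k) by lia. reflexivity.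
Qed.

Lemma Yu_pos l k u : Yu l (Z.of_nat k) u = Ynn l k u.
Proof. unfold Yu, Ynn. apply Ylm_pos. Qed.
Lemma Yu_neg l k u : Yu l (- Z.of_nat k) u = (RtoC ((-1) ^ k) * Cconj (Ynn l k u))%C.
Proof. unfold Yu, Ynn. apply Ylm_neg. Qed.

Lemma Z_split (m : Z) : (exists k, m = Z.of_nat k) \/ (exists k, m = - Z.of_nat (S k))%Z.
Proof.
  destruct (Z_le_gt_dec 0 m).
  - left. exists (Z.to_nat m). lia.
  - right. exists (pred (Z.to_nat (- m))). lia.
Qed.

Lemma cp_nat l k : (k <= l)%nat -> cp l (Z.of_nat k) = cpn l k.
Proof.
  intros. unfold cp, cpn. f_equal. rewrite INR_IZR_INZ. f_equal.
  rewrite Nat2Z.inj_mul, Nat2Z.inj_sub, !Nat2Z.inj_add by lia. simpl. lia.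
Qed.

Lemma cp_negS l k : (k < l)%nat -> cp l (- Z.of_nat (S k)) = cpn l k.
Proof.
  intros. unfold cp, cpn. f_equal. rewrite INR_IZR_INZ. f_equal.
  rewrite Nat2Z.inj_mul, Nat2Z.inj_sub, !Nat2Z.inj_add by lia. simpl. lia.
Qed.

Lemma cp_top l : cp l (Z.of_nat l) = 0.
Proof. unfold cp. replace (Z.of_nat l - Z.of_nat l)%Z with 0%Z by lia. simpl. apply sqrt_0. Qed.

Lemma cp_bot l : cp l (- Z.of_nat l - 1) = 0.
Proof. unfold cp. replace (Z.of_nat l + (- Z.of_nat l - 1) + 1)%Z with 0%Z by lia.
  rewrite Z.mul_0_r. apply sqrt_0. Qed.

Lemma Nat_Lm0 l u : 0 < q3 u -> Lmd u (dYnn l 0 u) = (- Cconj (Lpd u (dYnn l 0 u)))%C.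
Proof.
  intros H. rewrite <- Lmd_conj. f_equal. apply functional_extensionality; intros k.
  unfold dYnn. simpl Defs.Cpow. change (INR 0) with 0.
  apply injective_projections; simpl; ring.
Qed.

Lemma Z_Lz l m u : 0 < q3 u -> opAd u X1 X2 (dYZ l m u) = (RtoC (IZR m) * Yu l m u)%C.
Proof.
  intros H. destruct (Z_split m) as [[k ->]|[k ->]].
  - rewrite dYZ_pos, Yu_pos. unfold Ynn. rewrite ang_Lz by exact H.
    rewrite <- INR_IZR_INZ. reflexivity.
  - rewrite dYZ_neg, Yu_neg. rewrite Lz_scal, Lz_conj. rewrite ang_Lz by exact H.
    fold (Ynn l (S k) u). destruct (Ynn l (S k) u) as [y1 y2].
    rewrite opp_IZR, <- INR_IZR_INZ.
    apply injective_projections; simpl; ring.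
Qed.

Lemma Z_Lp l m u : 0 < q3 u -> (Z.abs m <= Z.of_nat l)%Z ->
  Lpd u (dYZ l m u) = (RtoC (cp l m) * Yu l (m + 1) u)%C.
Proof.
  intros H Hm. destruct (Z_split m) as [[k ->]|[k ->]].
  - rewrite dYZ_pos. replace (Z.of_nat k + 1)%Z with (Z.of_nat (S k)) by lia.
    rewrite Yu_pos. destruct (Nat.eq_dec k l) as [->|Hk].
    + rewrite Nat_Lp_top by exact H. rewrite cp_top. apply injective_projections; simpl; ring.
    + rewrite Nat_Lp by (auto; lia). rewrite cp_nat by lia. reflexivity.
  - rewrite dYZ_neg. rewrite Lpd_scal, Lpd_conj.
    rewrite Nat_Lm by (auto; lia).
    replace (- Z.of_nat (S k) + 1)%Z with (- Z.of_nat k)%Z by lia.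
    rewrite Yu_neg. rewrite cp_negS by lia.
    destruct (Ynn l k u) as [y1 y2]. simpl pow.
    apply injective_projections; simpl; ring.
Qed.

Lemma Z_Lm l m u : 0 < q3 u -> (Z.abs m <= Z.of_nat l)%Z ->
  Lmd u (dYZ l m u) = (RtoC (cp l (m - 1)) * Yu l (m - 1) u)%C.
Proof.
  intros H Hm. destruct (Z_split m) as [[k ->]|[k ->]].
  - rewrite dYZ_pos. destruct k as [|k].
    + rewrite Nat_Lm0 by exact H. replace (Z.of_nat 0 - 1)%Z with (- Z.of_nat 1)%Z by lia.
      rewrite Yu_neg. destruct (Nat.eq_dec l 0) as [->|Hl].
      * rewrite Nat_Lp_top by exact H. unfold cp. simpl. rewrite sqrt_0.
        apply injective_projections; simpl; ring.
      * rewrite Nat_Lp by (auto; lia). rewrite cp_negS by lia.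
        destruct (Ynn l 1 u) as [y1 y2]. apply injective_projections; simpl; ring.
    + rewrite Nat_Lm by (auto; lia).
      replace (Z.of_nat (S k) - 1)%Z with (Z.of_nat k) by lia.
      rewrite Yu_pos, cp_nat by lia. reflexivity.
  - rewrite dYZ_neg. rewrite Lmd_scal, Lmd_conj.
    replace (- Z.of_nat (S k) - 1)%Z with (- Z.of_nat (S (S k)))%Z by lia.
    rewrite Yu_neg. destruct (Nat.eq_dec (S k) l) as [<-|Hk].
    + rewrite Nat_Lp_top by exact H.
      replace (- Z.of_nat (S (S k)))%Z with (- Z.of_nat (S k) - 1)%Z by lia. rewrite cp_bot.
      apply injective_projections; simpl; ring.
    + rewrite Nat_Lp by (auto; lia).
      replace (- Z.of_nat (S (S k)))%Z with (- Z.of_nat (S (S k)))%Z by lia.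
      rewrite cp_negS by lia.
      destruct (Ynn l (S (S k)) u) as [y1 y2]. simpl pow.
      apply injective_projections; simpl; ring.
Qed.

Lemma sbj_ex l x : ex_derive (sph_bessel_j l) x.
Proof.
  exists (2 ^ l * (INR l * x ^ (pred l)) * hb l (x ^ 2) + 2 ^ l * x ^ l * ((2 * x) * - hb (S l) (x ^ 2))).
  apply (is_derive_ext (fun x => 2 ^ l * x ^ l * hb l (x ^ 2))).
  { intros; symmetry; apply sbj_eq. }
  apply (isd_mult (fun x => 2 ^ l * x ^ l) (fun x => hb l (x ^ 2))).
  - eapply is_derive_eq. apply (isd_mult (fun _ => 2 ^ l) (fun x => x ^ l)). apply isd_const.
    assert (Hp : is_derive (fun x : R => x ^ l) x (INR l * x ^ (pred l))).
    { auto_derive; auto. ring. }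
    exact Hp. ring.
  - apply (isd_comp (hb l) (fun x => x ^ 2)). apply hb_deriv.
    assert (Hp : is_derive (fun x : R => x ^ 2) x (2 * x)).
    { auto_derive; auto. ring. }
    exact Hp.
Qed.

Lemma sbj_d l x : is_derive (sph_bessel_j l) x (Derive (sph_bessel_j l) x).
Proof. apply Derive_correct, sbj_ex. Qed.

Lemma Psi_Yu l m n u v : Psi l m n u v =
  (RtoC (sph_bessel_j l (norm3 u * norm3 v)) * Yu l m u * Yu l n v)%C.
Proof. reflexivity. Qed.

Lemma CD_Psi_u l m n u v k : 0 < q3 u ->
  CD (fun t => Psi l m n (upd u k t) v) (coord u k)
   ((RtoC (Derive (sph_bessel_j l) (norm3 u * norm3 v) * (norm3 v / norm3 u)) * RtoC (coord u k)
      * Yu l m u + RtoC (sph_bessel_j l (norm3 u * norm3 v)) * dYZ l m u k) * Yu l n v)%C.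
Proof.
  intros H. pose proof (norm3_pos u H) as Hr.
  apply (CD_ext (fun t => (RtoC (sph_bessel_j l (norm3 (upd u k t) * norm3 v)) * Yu l m (upd u k t)) * Yu l n v)%C).
  { intros; reflexivity. }
  pose proof (CD_mult (fun t => RtoC (sph_bessel_j l (norm3 (upd u k t) * norm3 v)) * Yu l m (upd u k t))%C
     (fun _ => Yu l n v) (coord u k)
     (RtoC (Derive (sph_bessel_j l) (norm3 u * norm3 v) * (norm3 v / norm3 u)) * RtoC (coord u k)
      * Yu l m u + RtoC (sph_bessel_j l (norm3 u * norm3 v)) * dYZ l m u k)%C (RtoC 0)) as HM.
  cbv beta in HM. rewrite upd_same in HM.
  eapply CD_eq. apply HM.
  - pose proof (CD_mult (fun t => RtoC (sph_bessel_j l (norm3 (upd u k t) * norm3 v)))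
       (fun t => Yu l m (upd u k t)) (coord u k)
       (RtoC (Derive (sph_bessel_j l) (norm3 u * norm3 v) * (norm3 v / norm3 u)) * RtoC (coord u k))%C
       (dYZ l m u k)) as HM2.
    cbv beta in HM2. rewrite upd_same in HM2. apply HM2.
    + rewrite <- RtoC_mult. apply CD_RtoC.
      eapply is_derive_eq.
      apply (isd_comp (sph_bessel_j l) (fun t => norm3 (upd u k t) * norm3 v)).
      * cbv beta. rewrite upd_same. apply sbj_d.
      * apply (isd_mult (fun t => norm3 (upd u k t)) (fun _ => norm3 v)).
        apply path_norm; exact H. apply isd_const.
      * field. lra.
    + apply CD_YZ; exact H.
  - apply CD_const.
  - ring.
Qed.

Lemma du_Psi l m n u v k : 0 < q3 u ->
  du k (Psi l m n) u v =
   ((RtoC (Derive (sph_bessel_j l) (norm3 u * norm3 v) * (norm3 v / norm3 u)) * RtoC (coord u k)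
      * Yu l m u + RtoC (sph_bessel_j l (norm3 u * norm3 v)) * dYZ l m u k) * Yu l n v)%C.
Proof. intros H. unfold du. apply CD_dC. apply CD_Psi_u; exact H. Qed.

Lemma opA_Psi l m n u v i j : 0 < q3 u ->
  opA i j (Psi l m n) u v =
  (RtoC (sph_bessel_j l (norm3 u * norm3 v)) * opAd u i j (dYZ l m u) * Yu l n v)%C.
Proof.
  intros H. unfold opA. rewrite !du_Psi by exact H. unfold opAd. ring.
Qed.

Lemma q3_zero u : ~ 0 < q3 u -> u = ((0, 0), 0).
Proof.
  intros H. pose proof (q3_nonneg u). destruct u as [[a b] c]. unfold q3 in *. simpl in *.
  assert (a * a + b * b + c * c = 0) by lra.
  assert (a = 0) by nra. assert (b = 0) by nra. assert (c = 0) by nra. subst; reflexivity.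
Qed.

Lemma opA_zero f i j v : opA i j f ((0, 0), 0) v = RtoC 0.
Proof.
  unfold opA. destruct i, j; simpl coord; apply injective_projections; simpl; ring.
Qed.

Lemma norm3_zero : norm3 ((0, 0), 0) = 0.
Proof. unfold norm3. replace (0 * 0 + 0 * 0 + 0 * 0) with 0 by ring. apply sqrt_0. Qed.

Lemma sbj_0 l : (0 < l)%nat -> sph_bessel_j l 0 = 0.
Proof. intros. rewrite sbj_eq. rewrite pow_i by lia. ring. Qed.

Lemma Psi_zero l m n v : (0 < l)%nat -> Psi l m n ((0, 0), 0) v = RtoC 0.
Proof.
  intros H. rewrite Psi_Yu, norm3_zero, Rmult_0_l, sbj_0 by exact H. ring.
Qed.

Definition LpA (f : PhysFun) : PhysFun := Fadd (opA X2 X3 f) (Fscal Ci (opA X3 X1 f)).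
Definition LmA (f : PhysFun) : PhysFun := Fadd (opA X2 X3 f) (Fscal (- Ci) (opA X3 X1 f)).

Lemma cp_l0 m : (Z.abs m <= 0)%Z -> cp 0 m = 0.
Proof. intros. assert (m = 0%Z) by lia. subst. unfold cp. simpl. apply sqrt_0. Qed.
Lemma cp_l0' m : (Z.abs m <= 0)%Z -> cp 0 (m - 1) = 0.
Proof. intros. assert (m = 0%Z) by lia. subst. unfold cp. simpl. apply sqrt_0. Qed.

Lemma LpA_Psi l m n : valid_idx l m n ->
  LpA (Psi l m n) = Fscal (RtoC (cp l m)) (Psi l (m + 1) n).
Proof.
  intros [Hm Hn]. apply functional_extensionality; intros u; apply functional_extensionality; intros v.
  unfold LpA, Fadd, Fscal.
  destruct (Rlt_dec 0 (q3 u)) as [H|H].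
  - rewrite !opA_Psi by exact H. rewrite (Psi_Yu l (m + 1)).
    transitivity (RtoC (sph_bessel_j l (norm3 u * norm3 v)) * Lpd u (dYZ l m u) * Yu l n v)%C;
      [unfold Lpd; ring|]. rewrite (Z_Lp l m u H Hm). ring.
  - apply q3_zero in H. subst u. rewrite !opA_zero.
    destruct l as [|l].
    + rewrite cp_l0 by lia. ring.
    + rewrite Psi_zero by lia. ring.
Qed.

Lemma LmA_Psi l m n : valid_idx l m n ->
  LmA (Psi l m n) = Fscal (RtoC (cp l (m - 1))) (Psi l (m - 1) n).
Proof.
  intros [Hm Hn]. apply functional_extensionality; intros u; apply functional_extensionality; intros v.
  unfold LmA, Fadd, Fscal.
  destruct (Rlt_dec 0 (q3 u)) as [H|H].
  - rewrite !opA_Psi by exact H. rewrite (Psi_Yu l (m - 1)).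
    transitivity (RtoC (sph_bessel_j l (norm3 u * norm3 v)) * Lmd u (dYZ l m u) * Yu l n v)%C;
      [unfold Lmd; ring|]. rewrite (Z_Lm l m u H Hm). ring.
  - apply q3_zero in H. subst u. rewrite !opA_zero.
    destruct l as [|l].
    + rewrite cp_l0' by lia. ring.
    + rewrite Psi_zero by lia. ring.
Qed.

Lemma Lz_Psi l m n : valid_idx l m n ->
  opA X1 X2 (Psi l m n) = Fscal (RtoC (IZR m)) (Psi l m n).
Proof.
  intros [Hm Hn]. apply functional_extensionality; intros u; apply functional_extensionality; intros v.
  unfold Fscal.
  destruct (Rlt_dec 0 (q3 u)) as [H|H].
  - rewrite !opA_Psi by exact H. rewrite (Psi_Yu l m).
    rewrite (Z_Lz l m u H). ring.
  - apply q3_zero in H. subst u. rewrite !opA_zero.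
    destruct l as [|l].
    + assert (m = 0%Z) by lia. subst. simpl IZR. ring.
    + rewrite Psi_zero by lia. ring.
Qed.

Definition swapF (f : PhysFun) : PhysFun := fun u v => f v u.

Lemma opB_swap i j f u v : opB i j f u v = opA i j (swapF f) v u.
Proof. reflexivity. Qed.

Lemma Psi_swap l m n : swapF (Psi l m n) = Psi l n m.
Proof.
  apply functional_extensionality; intros u; apply functional_extensionality; intros v.
  unfold swapF. rewrite !Psi_Yu. rewrite Rmult_comm. ring.
Qed.

Definition LpB (f : PhysFun) : PhysFun := Fadd (opB X2 X3 f) (Fscal Ci (opB X3 X1 f)).
Definition LmB (f : PhysFun) : PhysFun := Fadd (opB X2 X3 f) (Fscal (- Ci) (opB X3 X1 f)).

Lemma LpB_Psi l m n : valid_idx l m n ->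
  LpB (Psi l m n) = Fscal (RtoC (cp l n)) (Psi l m (n + 1)).
Proof.
  intros [Hm Hn].
  apply functional_extensionality; intros u; apply functional_extensionality; intros v.
  pose proof (f_equal (fun F => F v u) (LpA_Psi l n m (conj Hn Hm))) as E. simpl in E.
  unfold LpB, LpA, Fadd, Fscal in *. rewrite !opB_swap, !Psi_swap. rewrite E.
  rewrite <- Psi_swap. reflexivity.
Qed.

Lemma LmB_Psi l m n : valid_idx l m n ->
  LmB (Psi l m n) = Fscal (RtoC (cp l (n - 1))) (Psi l m (n - 1)).
Proof.
  intros [Hm Hn].
  apply functional_extensionality; intros u; apply functional_extensionality; intros v.
  pose proof (f_equal (fun F => F v u) (LmA_Psi l n m (conj Hn Hm))) as E. simpl in E.
  unfold LmB, LmA, Fadd, Fscal in *. rewrite !opB_swap, !Psi_swap. rewrite E.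
  rewrite <- Psi_swap. reflexivity.
Qed.

Lemma Lzv_Psi l m n : valid_idx l m n ->
  opB X1 X2 (Psi l m n) = Fscal (RtoC (IZR n)) (Psi l m n).
Proof.
  intros [Hm Hn].
  apply functional_extensionality; intros u; apply functional_extensionality; intros v.
  pose proof (f_equal (fun F => F v u) (Lz_Psi l n m (conj Hn Hm))) as E. simpl in E.
  unfold Fscal in *. rewrite !opB_swap, !Psi_swap. rewrite E.
  rewrite <- Psi_swap. reflexivity.
Qed.

Definition Wpow (u : R3) (l : nat) : C := Defs.Cpow (coord u X1, coord u X2) l.

Definition pe (e l : nat) (z : R) : R :=
  match e with 0%nat => 1 | 1%nat => z | _ => (2 * INR l + 3) * z * z - 1 end.
Definition Ae (e l : nat) (u : R3) : R :=
  match e with 0%nat => 1 | 1%nat => coord u X3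
  | _ => (2 * INR l + 3) * coord u X3 * coord u X3 - q3 u end.
Definition kap (e l : nat) : R :=
  match e with
  | 0%nat => INR (fact (2 * l)) / (2 ^ l * INR (fact l))
  | 1%nat => INR (fact (2 * l + 2)) / (2 ^ (S l) * INR (fact (S l)))
  | _ => INR (S (S l)) * INR (fact (2 * l + 2)) / (2 ^ (S (S l)) * INR (fact (S (S l))))
  end.

Lemma leg_top e l z : (e <= 2)%nat -> legendre_deriv (l + e) l z = kap e l * pe e l z.
Proof.
  intros He. unfold legendre_deriv.
  destruct e as [|[|[|e]]]; try lia.
  - rewrite Nat.add_0_r. change (Derive_n (fun t => (t ^ 2 - 1) ^ l) (l + l) z) with (DL l (l + l) z).
    replace (l + l)%nat with (2 * l)%nat by lia. rewrite DL_top. simpl pe. unfold kap. field.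
    split; [apply Rgt_not_eq, fact_pos| apply pow_nonzero; lra].
  - replace (l + 1)%nat with (S l) by lia.
    change (Derive_n (fun t => (t ^ 2 - 1) ^ (S l)) (S l + l) z) with (DL (S l) (S l + l) z).
    replace (S l + l)%nat with (S (2 * l)) by lia. rewrite DL_top1. simpl pe. unfold kap.
    field. split; [apply Rgt_not_eq, fact_pos| apply pow_nonzero; lra].
  - replace (l + 2)%nat with (S (S l)) by lia.
    change (Derive_n (fun t => (t ^ 2 - 1) ^ (S (S l))) (S (S l) + l) z) with (DL (S (S l)) (S (S l) + l) z).
    replace (S (S l) + l)%nat with (2 * l + 2)%nat by lia. rewrite DL_top2. unfold pe, kap.
    field. split; [apply Rgt_not_eq, fact_pos| apply pow_nonzero; lra].
Qed.

Lemma Ae_pe e l u : (e <= 2)%nat -> 0 < q3 u -> Ae e l u = norm3 u ^ e * pe e l (xh u X3).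
Proof.
  intros He H. pose proof (norm3_pos u H) as Hr.
  assert (E : norm3 u * norm3 u = q3 u) by (rewrite norm3_q3; apply sqrt_sqrt; lra).
  destruct e as [|[|[|e]]]; try lia; unfold Ae, pe, xh; simpl.
  - ring.
  - field. lra.
  - rewrite <- E. field. lra.
Qed.

Lemma Cpow_scal (s a b : R) n : Defs.Cpow (s * a, s * b) n = (RtoC (s ^ n) * Defs.Cpow (a, b) n)%C.
Proof.
  induction n.
  - simpl. apply injective_projections; simpl; ring.
  - change (Defs.Cpow (s * a, s * b) (S n)) with (Cmult (s * a, s * b) (Defs.Cpow (s * a, s * b) n)).
    rewrite IHn. change (Defs.Cpow (a, b) (S n)) with (Cmult (a, b) (Defs.Cpow (a, b) n)).
    destruct (Defs.Cpow (a, b) n) as [p1 p2]. simpl pow.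
    apply injective_projections; simpl; ring.
Qed.

Definition KL (e l : nat) : R := (NK (l + e) l * (-1) ^ l * kap e l) ^ 2.

Definition Sform (e l : nat) (u v : R3) : C :=
  (RtoC (KL e l * 2 ^ (l + e) * hb (l + e) (q3 u * q3 v) * Ae e l u * Ae e l v)
   * (Wpow u l * Wpow v l))%C.

Lemma Yu_form e l u : (e <= 2)%nat -> 0 < q3 u ->
  Yu (l + e) (Z.of_nat l) u =
  (RtoC (NK (l + e) l * (-1) ^ l * kap e l * pe e l (xh u X3) * (/ norm3 u) ^ l) * Wpow u l)%C.
Proof.
  intros He H. rewrite Yu_pos. unfold Ynn. rewrite Ynn_hat. rewrite leg_top by exact He.
  unfold xh at 2 3. rewrite Cpow_scal. unfold Wpow. rewrite !RtoC_mult. ring.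
Qed.

Lemma form_pos e l u v : (e <= 2)%nat -> 0 < q3 u -> 0 < q3 v ->
  Psi (l + e) (Z.of_nat l) (Z.of_nat l) u v = Sform e l u v.
Proof.
  intros He Hu Hv. rewrite Psi_Yu. rewrite !Yu_form by assumption.
  unfold Sform. rewrite (Ae_pe e l u He Hu), (Ae_pe e l v He Hv).
  rewrite sbj_eq.
  pose proof (norm3_pos u Hu) as Hr. pose proof (norm3_pos v Hv) as Hs.
  assert (Er : norm3 u * norm3 u = q3 u) by (rewrite norm3_q3; apply sqrt_sqrt; lra).
  assert (Es : norm3 v * norm3 v = q3 v) by (rewrite norm3_q3; apply sqrt_sqrt; lra).
  replace ((norm3 u * norm3 v) ^ 2) with (q3 u * q3 v) by (rewrite <- Er, <- Es; ring).
  unfold KL.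
  set (r := norm3 u) in *. set (s := norm3 v) in *.
  rewrite !pow_inv. rewrite Rpow_mult_distr, !pow_add.
  assert (r ^ l <> 0) by (apply pow_nonzero; lra).
  assert (s ^ l <> 0) by (apply pow_nonzero; lra).
  set (rl := r ^ l) in *. set (sl := s ^ l) in *.
  destruct (Wpow u l) as [w1 w2]. destruct (Wpow v l) as [z1 z2].
  apply injective_projections; simpl; field; repeat split; lra.
Qed.

Lemma Sform_sym e l u v : Sform e l u v = Sform e l v u.
Proof. unfold Sform. rewrite (Rmult_comm (q3 u)). rewrite !RtoC_mult. ring. Qed.

Lemma q3_0 : q3 ((0, 0), 0) = 0.
Proof. unfold q3; simpl; ring. Qed.

Lemma legendre00 z : legendre_deriv 0 0 z = 1.
Proof. unfold legendre_deriv. simpl. field. Qed.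

Lemma form_zero e l v : (e <= 2)%nat ->
  Psi (l + e) (Z.of_nat l) (Z.of_nat l) ((0, 0), 0) v = Sform e l ((0, 0), 0) v.
Proof.
  intros He.
  destruct (Nat.eq_dec (l + e) 0) as [E0|E0].
  - assert (l = 0%nat) by lia. assert (e = 0%nat) by lia. subst.
    replace (0 + 0)%nat with 0%nat by reflexivity.
    rewrite Psi_Yu. change (Z.of_nat 0) with 0%Z. unfold Yu.
    change (Ylm 0 0 ?w) with (Ylm_nonneg 0 0 w). rewrite !Ynn_hat. rewrite !legendre00.
    rewrite norm3_zero, Rmult_0_l, sbj_eq.
    unfold Sform, Wpow, KL, kap, Ae. rewrite q3_0, Rmult_0_l. simpl Defs.Cpow. simpl pow.
    replace (fact (2 * 0)) with 1%nat by reflexivity. replace (fact 0) with 1%nat by reflexivity.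
    change (INR 1) with 1. replace (0 ^ 2) with 0 by ring.
    set (N := NK 0 0). set (H0 := hb 0 0).
    apply injective_projections; simpl; replace (0 * (0 * 1)) with 0 by ring; field.
  - rewrite Psi_zero by lia. unfold Sform.
    destruct l as [|l].
    + destruct e as [|[|[|e]]]; try lia; unfold Ae; simpl coord; rewrite ?q3_0;
      apply injective_projections; simpl; ring.
    + unfold Wpow. simpl coord. simpl Defs.Cpow.
      apply injective_projections; simpl; ring.
Qed.

Lemma form_all e l u v : (e <= 2)%nat ->
  Psi (l + e) (Z.of_nat l) (Z.of_nat l) u v = Sform e l u v.
Proof.
  intros He.
  destruct (Rlt_dec 0 (q3 u)) as [Hu|Hu].
  - destruct (Rlt_dec 0 (q3 v)) as [Hv|Hv].
    + apply form_pos; assumption.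
    + apply q3_zero in Hv. subst v.
      rewrite <- (Psi_swap (l + e) (Z.of_nat l) (Z.of_nat l)). unfold swapF.
      rewrite form_zero by exact He. apply Sform_sym.
  - apply q3_zero in Hu. subst u. apply form_zero; exact He.
Qed.

Lemma Psi_form e l : (e <= 2)%nat -> Psi (l + e) (Z.of_nat l) (Z.of_nat l) = Sform e l.
Proof.
  intros He. apply functional_extensionality; intros u; apply functional_extensionality; intros v.
  apply form_all; exact He.
Qed.

Lemma NK_sq L m : (m <= L)%nat -> NK L m * NK L m =
  (2 * INR L + 1) / (4 * PI) * INR (fact (L - m)) / INR (fact (L + m)).
Proof.
  intros. unfold NK. apply sqrt_sqrt.
  pose proof PI_RGT_0. pose proof (pos_INR L). pose proof (fact_pos (L - m)). pose proof (fact_pos (L + m)).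
  apply Rmult_le_pos; [apply Rmult_le_pos|].
  - apply Rdiv_le_0_compat; lra.
  - lra.
  - apply Rlt_le, Rinv_0_lt_compat; lra.
Qed.

Lemma KL_alt e l : (e <= 2)%nat -> KL e l = NK (l + e) l * NK (l + e) l * (kap e l * kap e l).
Proof.
  intros. unfold KL.
  assert (Hs : (-1) ^ l * (-1) ^ l = 1).
  { rewrite <- Rpow_mult_distr. replace (-1 * -1) with 1 by ring. apply pow1. }
  transitivity (NK (l + e) l * NK (l + e) l * (kap e l * kap e l) * ((-1) ^ l * (-1) ^ l)).
  ring. rewrite Hs. ring.
Qed.

Lemma KL1 l : KL 1 l = (2 * INR l + 3) * KL 0 l.
Proof.
  rewrite !KL_alt by lia. rewrite !NK_sq by lia.
  replace (l + 1 - l)%nat with 1%nat by lia. replace (l + 0 - l)%nat with 0%nat by lia.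
  replace (l + 1 + l)%nat with (S (2 * l)) by lia. replace (l + 0 + l)%nat with (2 * l)%nat by lia.
  unfold kap. replace (2 * l + 2)%nat with (S (S (2 * l))) by lia.
  rewrite !INR_fact_S. replace (l + 1)%nat with (S l) by lia.
  pose proof (fact_pos (2 * l)). pose proof (fact_pos l). pose proof PI_RGT_0.
  replace (fact 1) with 1%nat by reflexivity. replace (fact 0) with 1%nat by reflexivity.
  set (F1 := INR (fact (2 * l))) in *. set (F2 := INR (fact l)) in *.
  rewrite !S_INR, !mult_INR, !plus_INR. simpl INR. simpl pow.
  assert (0 <= INR l) by apply pos_INR.
  assert (0 < 2 ^ l) by (apply pow_lt; lra).
  field. repeat split; lra.
Qed.

Lemma KL2_pos l : 0 < KL 2 l.
Proof.
  rewrite KL_alt by lia. rewrite NK_sq by lia.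
  pose proof PI_RGT_0. pose proof (pos_INR (l + 2)).
  pose proof (fact_pos (l + 2 - l)). pose proof (fact_pos (l + 2 + l)).
  assert (0 < kap 2 l * kap 2 l).
  { assert (0 < kap 2 l).
    { unfold kap. pose proof (fact_pos (2 * l + 2)). pose proof (fact_pos (S (S l))).
      assert (0 < INR (S (S l))) by (apply lt_0_INR; lia).
      assert (0 < 2 ^ S (S l)) by (apply pow_lt; lra).
      apply Rdiv_lt_0_compat; apply Rmult_lt_0_compat; assumption. }
    apply Rmult_lt_0_compat; assumption. }
  apply Rmult_lt_0_compat; [|exact H3].
  apply Rmult_lt_0_compat; [apply Rmult_lt_0_compat|].
  - apply Rdiv_lt_0_compat; lra.
  - lra.
  - apply Rinv_0_lt_compat; lra.
Qed.

Lemma Wpow_upd3 u t l : Wpow (upd u X3 t) l = Wpow u l.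
Proof. destruct u as [[a b] c]; reflexivity. Qed.

Lemma dv3_gen (G G3 : R3 -> R3 -> R) l :
  (forall u v, is_derive (fun t => G u (upd v X3 t)) (coord v X3) (G3 u v)) ->
  dv X3 (fun u v => (RtoC (G u v) * (Wpow u l * Wpow v l))%C)
  = (fun u v => (RtoC (G3 u v) * (Wpow u l * Wpow v l))%C).
Proof.
  intros HG. apply functional_extensionality; intros u; apply functional_extensionality; intros v.
  unfold dv. apply CD_dC.
  apply (CD_ext (fun t => (RtoC (G u (upd v X3 t)) * (Wpow u l * Wpow v l))%C)).
  { intros; rewrite Wpow_upd3; reflexivity. }
  pose proof (CD_mult (fun t => RtoC (G u (upd v X3 t))) (fun _ => (Wpow u l * Wpow v l)%C)
     (coord v X3) (RtoC (G3 u v)) (RtoC 0) (CD_RtoC _ _ _ (HG u v)) (CD_const _ _)) as HM.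
  cbv beta in HM. apply (CD_eq _ _ _ _ HM). ring.
Qed.

Lemma du3_gen (G G3 : R3 -> R3 -> R) l :
  (forall u v, is_derive (fun t => G (upd u X3 t) v) (coord u X3) (G3 u v)) ->
  du X3 (fun u v => (RtoC (G u v) * (Wpow u l * Wpow v l))%C)
  = (fun u v => (RtoC (G3 u v) * (Wpow u l * Wpow v l))%C).
Proof.
  intros HG. apply functional_extensionality; intros u; apply functional_extensionality; intros v.
  unfold du. apply CD_dC.
  apply (CD_ext (fun t => (RtoC (G (upd u X3 t) v) * (Wpow u l * Wpow v l))%C)).
  { intros; rewrite Wpow_upd3; reflexivity. }
  pose proof (CD_mult (fun t => RtoC (G (upd u X3 t) v)) (fun _ => (Wpow u l * Wpow v l)%C)
     (coord u X3) (RtoC (G3 u v)) (RtoC 0) (CD_RtoC _ _ _ (HG u v)) (CD_const _ _)) as HM.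
  cbv beta in HM. apply (CD_eq _ _ _ _ HM). ring.
Qed.

Lemma hb_Derive L y : Derive (hb L) y = - hb (S L) y.
Proof. apply is_derive_unique, hb_deriv. Qed.
Lemma hb_exd L y : ex_derive (hb L) y.
Proof. eexists; apply hb_deriv. Qed.

Definition Gs (e l : nat) (u v : R3) : R :=
  KL e l * 2 ^ (l + e) * hb (l + e) (q3 u * q3 v) * Ae e l u * Ae e l v.

Lemma Sform_Gs e l : Sform e l = (fun u v => (RtoC (Gs e l u v) * (Wpow u l * Wpow v l))%C).
Proof. reflexivity. Qed.

Definition G03 (l : nat) (u v : R3) : R :=
  KL 0 l * 2 ^ (l + 0) * (- hb (S (l + 0)) (q3 u * q3 v)) * (q3 u * (2 * coord v X3)).
Definition G033 (l : nat) (u v : R3) : R :=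
  KL 0 l * 2 ^ (l + 0) *
   (hb (S (S (l + 0))) (q3 u * q3 v) * (2 * coord u X3 * q3 v) * (q3 u * (2 * coord v X3))
    - hb (S (l + 0)) (q3 u * q3 v) * (2 * coord u X3 * (2 * coord v X3))).

Lemma G03_d l u v : is_derive (fun t => Gs 0 l u (upd v X3 t)) (coord v X3) (G03 l u v).
Proof.
  destruct u as [[a b] c], v as [[d e] f]. unfold Gs, G03, Ae, q3. simpl.
  auto_derive. repeat split; apply hb_exd. rewrite !hb_Derive. ring.
Qed.

Lemma G033_d l u v : is_derive (fun t => G03 l (upd u X3 t) v) (coord u X3) (G033 l u v).
Proof.
  destruct u as [[a b] c], v as [[d e] f]. unfold G033, G03, q3. simpl.
  auto_derive. repeat split; apply hb_exd. rewrite !hb_Derive. ring.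
Qed.

Lemma C33_1 l : opC X3 X3 (Sform 0 l) =
  Fscal (RtoC ((2 * INR l + 1) / (2 * INR l + 3))) (Sform 1 l).
Proof.
  apply functional_extensionality; intros u; apply functional_extensionality; intros v.
  unfold opC, Fscal. rewrite (Sform_Gs 0 l). rewrite (dv3_gen _ _ l (G03_d l)).
  rewrite (du3_gen _ _ l (G033_d l)). rewrite (Sform_Gs 1 l).
  assert (E : coord u X3 * coord v X3 * Gs 0 l u v + G033 l u v =
              (2 * INR l + 1) / (2 * INR l + 3) * Gs 1 l u v).
  { unfold Gs, G033, Ae. rewrite KL1.
    replace (l + 0)%nat with l by lia. replace (l + 1)%nat with (S l) by lia.
    pose proof (hb_rec l (q3 u * q3 v)) as R.
    assert (0 <= INR l) by apply pos_INR.
    set (K := KL 0 l) in *. set (Q := q3 u * q3 v) in *.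
    set (h0 := hb l Q) in *. set (h1 := hb (S l) Q) in *. set (h2 := hb (S (S l)) Q) in *.
    simpl pow.
    transitivity ((2 * INR l + 1) / (2 * INR l + 3) * ((2 * INR l + 3) * K * (2 * 2 ^ l) * h1 * coord u X3 * coord v X3)
       + K * 2 ^ l * coord u X3 * coord v X3 * (h0 + 4 * Q * h2 - 2 * (2 * INR l + 3) * h1)).
    - unfold Q. field. lra.
    - replace (h0 + 4 * Q * h2 - 2 * (2 * INR l + 3) * h1) with 0 by lra. ring. }
  transitivity (RtoC (coord u X3 * coord v X3 * Gs 0 l u v + G033 l u v) * (Wpow u l * Wpow v l))%C.
  { rewrite RtoC_plus, !RtoC_mult. ring. }
  rewrite E, RtoC_mult. ring.
Qed.

Definition G13 (l : nat) (u v : R3) : R :=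
  KL 1 l * 2 ^ (l + 1) *
   (- hb (S (l + 1)) (q3 u * q3 v) * (q3 u * (2 * coord v X3)) * coord u X3 * coord v X3
    + hb (l + 1) (q3 u * q3 v) * coord u X3).
Definition G133 (l : nat) (u v : R3) : R :=
  KL 1 l * 2 ^ (l + 1) *
   (hb (S (S (l + 1))) (q3 u * q3 v) * (2 * coord u X3 * q3 v) * (q3 u * (2 * coord v X3)) * coord u X3 * coord v X3
    - hb (S (l + 1)) (q3 u * q3 v) * (2 * coord u X3) * (2 * coord v X3) * coord u X3 * coord v X3
    - hb (S (l + 1)) (q3 u * q3 v) * (q3 u * (2 * coord v X3)) * coord v X3
    - hb (S (l + 1)) (q3 u * q3 v) * (2 * coord u X3 * q3 v) * coord u X3
    + hb (l + 1) (q3 u * q3 v)).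

Lemma G13_d l u v : is_derive (fun t => Gs 1 l u (upd v X3 t)) (coord v X3) (G13 l u v).
Proof.
  destruct u as [[a b] c], v as [[d e] f]. unfold Gs, G13, Ae, q3. simpl.
  auto_derive. repeat split; apply hb_exd. rewrite !hb_Derive. ring.
Qed.

Lemma G133_d l u v : is_derive (fun t => G13 l (upd u X3 t) v) (coord u X3) (G133 l u v).
Proof.
  destruct u as [[a b] c], v as [[d e] f]. unfold G133, G13, q3. simpl.
  auto_derive. repeat split; apply hb_exd. rewrite !hb_Derive. ring.
Qed.

Definition gam (l : nat) : R := KL 1 l / ((2 * INR l + 3) * KL 2 l).

Lemma C33_2 l : opC X3 X3 (Sform 1 l) =
  Fadd (Sform 0 l) (Fscal (RtoC (gam l)) (Sform 2 l)).
Proof.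
  apply functional_extensionality; intros u; apply functional_extensionality; intros v.
  unfold opC, Fscal, Fadd. rewrite (Sform_Gs 1 l). rewrite (dv3_gen _ _ l (G13_d l)).
  rewrite (du3_gen _ _ l (G133_d l)). rewrite (Sform_Gs 0 l), (Sform_Gs 2 l).
  assert (E : coord u X3 * coord v X3 * Gs 1 l u v + G133 l u v =
              Gs 0 l u v + gam l * Gs 2 l u v).
  { unfold Gs, G133, Ae, gam. pose proof (KL2_pos l). rewrite KL1.
    replace (l + 0)%nat with l by lia. replace (l + 1)%nat with (S l) by lia.
    replace (l + 2)%nat with (S (S l)) by lia.
    pose proof (hb_rec l (q3 u * q3 v)) as R1.
    pose proof (hb_rec (S l) (q3 u * q3 v)) as R2. rewrite S_INR in R2.
    assert (0 <= INR l) by apply pos_INR.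
    set (K := KL 0 l) in *. set (K2 := KL 2 l) in *. set (Q := q3 u * q3 v) in *.
    set (h0 := hb l Q) in *. set (h1 := hb (S l) Q) in *. set (h2 := hb (S (S l)) Q) in *.
    set (h3 := hb (S (S (S l))) Q) in *.
    set (u3 := coord u X3). set (v3 := coord v X3). set (qu := q3 u) in *. set (qv := q3 v) in *.
    simpl pow.
    transitivity (K * 2 ^ l * h0 + K * (2 * INR l + 3) / ((2 * INR l + 3) * K2) *
        (K2 * (2 * (2 * 2 ^ l)) * h2 * ((2 * INR l + 3) * u3 * u3 - qu) * ((2 * INR l + 3) * v3 * v3 - qv))
      + (2 * INR l + 3) * K * (2 * 2 ^ l) *
        (u3 * u3 * v3 * v3 * (h1 + 4 * Q * h3 - 2 * (2 * (INR l + 1) + 3) * h2)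
         - (h0 + 4 * Q * h2 - 2 * (2 * INR l + 3) * h1) / (2 * (2 * INR l + 3)))).
    - unfold Q. field. lra.
    - replace (h1 + 4 * Q * h3 - 2 * (2 * (INR l + 1) + 3) * h2) with 0 by lra.
      replace (h0 + 4 * Q * h2 - 2 * (2 * INR l + 3) * h1) with 0 by lra.
      field. lra. }
  transitivity (RtoC (coord u X3 * coord v X3 * Gs 1 l u v + G133 l u v) * (Wpow u l * Wpow v l))%C.
  { rewrite RtoC_plus, !RtoC_mult. ring. }
  rewrite E, RtoC_plus, RtoC_mult. ring.
Qed.

Definition evs (s : list (C * (nat * Z * Z))) : PhysFun :=
  fun u v => fold_right
            (fun p acc => match snd p with (l, m, n) =>
                            (acc + fst p * Psi l m n u v)%C end)
            (RtoC 0) s.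

Lemma in_Vphys_iff f : in_Vphys f <-> exists s,
  List.Forall (fun p => match snd p with (l, m, n) => valid_idx l m n end) s /\ f = evs s.
Proof. reflexivity. Qed.

Lemma evs_app s1 s2 u v : evs (s1 ++ s2) u v = (evs s1 u v + evs s2 u v)%C.
Proof.
  induction s1 as [|[c [[l m] n]] s1 IH].
  - rewrite app_nil_l. unfold evs at 2. cbn [fold_right]. ring.
  - rewrite <- app_comm_cons. unfold evs in *. cbn [fold_right snd fst]. rewrite IH. ring.
Qed.

Lemma evs_map c s u v :
  evs (map (fun p => ((c * fst p)%C, snd p)) s) u v = (c * evs s u v)%C.
Proof.
  induction s as [|[c' [[l m] n]] s IH].
  - unfold evs. cbn [fold_right map]. ring.
  - unfold evs in *. cbn [fold_right snd fst map]. rewrite IH. ring.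
Qed.

Lemma Vadd f g : in_Vphys f -> in_Vphys g -> in_Vphys (Fadd f g).
Proof.
  intros [s1 [F1 E1]] [s2 [F2 E2]]. exists (s1 ++ s2). split.
  - apply Forall_app; auto.
  - subst. apply functional_extensionality; intros u; apply functional_extensionality; intros v.
    unfold Fadd. symmetry. apply (evs_app s1 s2 u v).
Qed.

Lemma Vscal c f : in_Vphys f -> in_Vphys (Fscal c f).
Proof.
  intros [s [F E]]. exists (map (fun p => ((c * fst p)%C, snd p)) s). split.
  - apply Forall_map. eapply Forall_impl; [|exact F]. intros [c' [[l m] n]]; simpl; auto.
  - subst. apply functional_extensionality; intros u; apply functional_extensionality; intros v.
    unfold Fscal. symmetry. apply (evs_map c s u v).
Qed.

Lemma Vzero : in_Vphys Fzero.
Proof. exists nil. split; [constructor|reflexivity]. Qed.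

Lemma VPsi l m n : valid_idx l m n -> in_Vphys (Psi l m n).
Proof.
  intros H. exists ((RtoC 1, (l, m, n)) :: nil). split.
  - constructor; auto.
  - apply functional_extensionality; intros u; apply functional_extensionality; intros v.
    cbn [fold_right snd fst]. ring.
Qed.

Lemma Fscal0 f : Fscal (RtoC 0) f = Fzero.
Proof.
  apply functional_extensionality; intros u; apply functional_extensionality; intros v.
  unfold Fscal, Fzero. ring.
Qed.


Lemma ip_scal_l ip (Hip : is_inner_product_on_Vphys ip) c f g :
  in_Vphys f -> in_Vphys g -> ip (Fscal c f) g = (Cconj c * ip f g)%C.
Proof.
  destruct Hip as [H1 [H2 [H3 H4]]]. intros Hf Hg.
  rewrite H3 by (auto; apply Vscal; auto). rewrite H2 by auto.
  rewrite (H3 g f) by auto. rewrite Cmult_conj. reflexivity.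
Qed.

Lemma ip_scal_r ip (Hip : is_inner_product_on_Vphys ip) c f g :
  in_Vphys f -> in_Vphys g -> ip f (Fscal c g) = (c * ip f g)%C.
Proof. destruct Hip as [H1 [H2 [H3 H4]]]. intros; apply H2; auto. Qed.

Lemma ip_add_r ip (Hip : is_inner_product_on_Vphys ip) f g h :
  in_Vphys f -> in_Vphys g -> in_Vphys h -> ip f (Fadd g h) = (ip f g + ip f h)%C.
Proof. destruct Hip as [H1 [H2 [H3 H4]]]. intros; apply H1; auto. Qed.

Lemma ip_add_l ip (Hip : is_inner_product_on_Vphys ip) f g h :
  in_Vphys f -> in_Vphys g -> in_Vphys h -> ip (Fadd f g) h = (ip f h + ip g h)%C.
Proof.
  destruct Hip as [H1 [H2 [H3 H4]]]. intros Hf Hg Hh.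
  rewrite H3 by (auto; apply Vadd; auto). rewrite H1 by auto.
  rewrite Cplus_conj. rewrite (H3 f h), (H3 g h) by auto. rewrite !Cconj_conj. reflexivity.
Qed.

Lemma ip_zero_l ip (Hip : is_inner_product_on_Vphys ip) g : in_Vphys g -> ip Fzero g = RtoC 0.
Proof.
  intros Hg. rewrite <- (Fscal0 Fzero). rewrite ip_scal_l by (auto; apply Vzero).
  destruct (ip Fzero g) as [a b]. apply injective_projections; simpl; ring.
Qed.

Lemma ip_zero_r ip (Hip : is_inner_product_on_Vphys ip) f : in_Vphys f -> ip f Fzero = RtoC 0.
Proof.
  intros Hf. rewrite <- (Fscal0 Fzero). rewrite ip_scal_r by (auto; apply Vzero). ring.
Qed.

Lemma ip_herm ip (Hip : is_inner_product_on_Vphys ip) f g :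
  in_Vphys f -> in_Vphys g -> ip g f = Cconj (ip f g).
Proof. destruct Hip as [H1 [H2 [H3 H4]]]. intros; apply H3; auto. Qed.

Lemma Cconj_RtoC x : Cconj (RtoC x) = RtoC x.
Proof. apply injective_projections; simpl; ring. Qed.

Lemma C_cancel x y (z : C) : (RtoC x * z = RtoC y * z)%C -> x <> y -> z = RtoC 0.
Proof.
  intros E Hxy. destruct z as [a b].
  assert (E1 := f_equal fst E). assert (E2 := f_equal snd E). simpl in E1, E2.
  assert ((x - y) * a = 0) by lra. assert ((x - y) * b = 0) by lra.
  assert (x - y <> 0) by lra.
  apply injective_projections; simpl.
  - apply (Rmult_eq_reg_l (x - y)); lra.
  - apply (Rmult_eq_reg_l (x - y)); lra.
Qed.

Lemma C_cancel1 x (z w : C) : (RtoC x * z = RtoC x * w)%C -> x <> 0 -> z = w.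
Proof.
  intros E Hx. destruct z as [a b], w as [c d].
  assert (E1 := f_equal fst E). assert (E2 := f_equal snd E). simpl in E1, E2.
  apply injective_projections; simpl; apply (Rmult_eq_reg_l x); lra.
Qed.

Lemma orth_m ip (Hip : is_inner_product_on_Vphys ip)
  (HA : forall i j : ax, symmetric_on_Vphys ip (opA i j)) l m n l' m' n' :
  valid_idx l m n -> valid_idx l' m' n' -> m <> m' ->
  ip (Psi l m n) (Psi l' m' n') = RtoC 0.
Proof.
  intros Va Vb Hm.
  pose proof (HA X1 X2 (Psi l m n) (Psi l' m' n') (VPsi _ _ _ Va) (VPsi _ _ _ Vb)) as E.
  rewrite (Lz_Psi l m n Va), (Lz_Psi l' m' n' Vb) in E.
  rewrite ip_scal_l, ip_scal_r in E by (auto; apply VPsi; auto).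
  rewrite Cconj_RtoC in E. apply (C_cancel _ _ _ E).
  intros H. apply eq_IZR in H. auto.
Qed.

Lemma orth_n ip (Hip : is_inner_product_on_Vphys ip)
  (HB : forall i j : ax, symmetric_on_Vphys ip (opB i j)) l m n l' m' n' :
  valid_idx l m n -> valid_idx l' m' n' -> n <> n' ->
  ip (Psi l m n) (Psi l' m' n') = RtoC 0.
Proof.
  intros Va Vb Hn.
  pose proof (HB X1 X2 (Psi l m n) (Psi l' m' n') (VPsi _ _ _ Va) (VPsi _ _ _ Vb)) as E.
  rewrite (Lzv_Psi l m n Va), (Lzv_Psi l' m' n' Vb) in E.
  rewrite ip_scal_l, ip_scal_r in E by (auto; apply VPsi; auto).
  rewrite Cconj_RtoC in E. apply (C_cancel _ _ _ E).
  intros H. apply eq_IZR in H. auto.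
Qed.

Lemma cp_pos l m : (- Z.of_nat l <= m < Z.of_nat l)%Z -> 0 < cp l m.
Proof.
  intros H. unfold cp. apply sqrt_lt_R0. apply IZR_lt. nia.
Qed.

Lemma V_up l m n : valid_idx l m n -> in_Vphys (Fscal (RtoC (cp l m)) (Psi l (m + 1) n)).
Proof.
  intros [Hm Hn]. destruct (Z.eq_dec m (Z.of_nat l)) as [->|H].
  - rewrite cp_top, Fscal0. apply Vzero.
  - apply Vscal, VPsi. split; lia.
Qed.

Lemma V_dn l m n : valid_idx l m n -> in_Vphys (Fscal (RtoC (cp l (m - 1))) (Psi l (m - 1) n)).
Proof.
  intros [Hm Hn]. destruct (Z.eq_dec m (- Z.of_nat l)) as [->|H].
  - rewrite cp_bot, Fscal0. apply Vzero.
  - apply Vscal, VPsi. split; lia.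
Qed.

Lemma V_upv l m n : valid_idx l m n -> in_Vphys (Fscal (RtoC (cp l n)) (Psi l m (n + 1))).
Proof.
  intros [Hm Hn]. destruct (Z.eq_dec n (Z.of_nat l)) as [->|H].
  - rewrite cp_top, Fscal0. apply Vzero.
  - apply Vscal, VPsi. split; lia.
Qed.

Lemma V_dnv l m n : valid_idx l m n -> in_Vphys (Fscal (RtoC (cp l (n - 1))) (Psi l m (n - 1))).
Proof.
  intros [Hm Hn]. destruct (Z.eq_dec n (- Z.of_nat l)) as [->|H].
  - rewrite cp_bot, Fscal0. apply Vzero.
  - apply Vscal, VPsi. split; lia.
Qed.

Lemma split23 (F : ax -> ax -> PhysFun) :
  F X2 X3 = Fadd (Fscal (RtoC (/ 2)) (Fadd (F X2 X3) (Fscal Ci (F X3 X1))))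
                 (Fscal (RtoC (/ 2)) (Fadd (F X2 X3) (Fscal (- Ci) (F X3 X1)))).
Proof.
  apply functional_extensionality; intros u; apply functional_extensionality; intros v.
  unfold Fadd, Fscal. destruct (F X2 X3 u v) as [a b]. destruct (F X3 X1 u v) as [c d].
  apply injective_projections; simpl; field.
Qed.

Lemma split31 (F : ax -> ax -> PhysFun) :
  F X3 X1 = Fadd (Fscal (0, - / 2) (Fadd (F X2 X3) (Fscal Ci (F X3 X1))))
                 (Fscal (0, / 2) (Fadd (F X2 X3) (Fscal (- Ci) (F X3 X1)))).
Proof.
  apply functional_extensionality; intros u; apply functional_extensionality; intros v.
  unfold Fadd, Fscal. destruct (F X2 X3 u v) as [a b]. destruct (F X3 X1 u v) as [c d].
  apply injective_projections; simpl; field.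
Qed.

Lemma V_A23 l m n : valid_idx l m n -> in_Vphys (opA X2 X3 (Psi l m n)).
Proof.
  intros V. rewrite (split23 (fun i j => opA i j (Psi l m n))).
  apply Vadd; apply Vscal.
  - change (in_Vphys (LpA (Psi l m n))). rewrite LpA_Psi by exact V. apply V_up; exact V.
  - change (in_Vphys (LmA (Psi l m n))). rewrite LmA_Psi by exact V. apply V_dn; exact V.
Qed.

Lemma V_A31 l m n : valid_idx l m n -> in_Vphys (opA X3 X1 (Psi l m n)).
Proof.
  intros V. rewrite (split31 (fun i j => opA i j (Psi l m n))).
  apply Vadd; apply Vscal.
  - change (in_Vphys (LpA (Psi l m n))). rewrite LpA_Psi by exact V. apply V_up; exact V.
  - change (in_Vphys (LmA (Psi l m n))). rewrite LmA_Psi by exact V. apply V_dn; exact V.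
Qed.

Lemma V_B23 l m n : valid_idx l m n -> in_Vphys (opB X2 X3 (Psi l m n)).
Proof.
  intros V. rewrite (split23 (fun i j => opB i j (Psi l m n))).
  apply Vadd; apply Vscal.
  - change (in_Vphys (LpB (Psi l m n))). rewrite LpB_Psi by exact V. apply V_upv; exact V.
  - change (in_Vphys (LmB (Psi l m n))). rewrite LmB_Psi by exact V. apply V_dnv; exact V.
Qed.

Lemma V_B31 l m n : valid_idx l m n -> in_Vphys (opB X3 X1 (Psi l m n)).
Proof.
  intros V. rewrite (split31 (fun i j => opB i j (Psi l m n))).
  apply Vadd; apply Vscal.
  - change (in_Vphys (LpB (Psi l m n))). rewrite LpB_Psi by exact V. apply V_upv; exact V.
  - change (in_Vphys (LmB (Psi l m n))). rewrite LmB_Psi by exact V. apply V_dnv; exact V.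
Qed.

Lemma Cconj_Ci : Cconj Ci = (- Ci)%C.
Proof. apply injective_projections; simpl; ring. Qed.

Lemma adjA ip (Hip : is_inner_product_on_Vphys ip)
  (HA : forall i j : ax, symmetric_on_Vphys ip (opA i j)) l m n l' m' n' :
  valid_idx l m n -> valid_idx l' m' n' ->
  ip (LpA (Psi l m n)) (Psi l' m' n') = ip (Psi l m n) (LmA (Psi l' m' n')).
Proof.
  intros Va Vb. pose proof (VPsi _ _ _ Va). pose proof (VPsi _ _ _ Vb).
  unfold LpA, LmA.
  rewrite ip_add_l, ip_scal_l by (first [assumption | apply V_A23; assumption | apply V_A31; assumption | apply Vscal; first [apply V_A23; assumption | apply V_A31; assumption]]).
  rewrite ip_add_r, ip_scal_r by (first [assumption | apply V_A23; assumption | apply V_A31; assumption | apply Vscal; first [apply V_A23; assumption | apply V_A31; assumption]]).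
  rewrite (HA X2 X3), (HA X3 X1) by auto. rewrite Cconj_Ci. reflexivity.
Qed.

Lemma adjB ip (Hip : is_inner_product_on_Vphys ip)
  (HB : forall i j : ax, symmetric_on_Vphys ip (opB i j)) l m n l' m' n' :
  valid_idx l m n -> valid_idx l' m' n' ->
  ip (LpB (Psi l m n)) (Psi l' m' n') = ip (Psi l m n) (LmB (Psi l' m' n')).
Proof.
  intros Va Vb. pose proof (VPsi _ _ _ Va). pose proof (VPsi _ _ _ Vb).
  unfold LpB, LmB.
  rewrite ip_add_l, ip_scal_l by (first [assumption | apply V_B23; assumption | apply V_B31; assumption | apply Vscal; first [apply V_B23; assumption | apply V_B31; assumption]]).
  rewrite ip_add_r, ip_scal_r by (first [assumption | apply V_B23; assumption | apply V_B31; assumption | apply Vscal; first [apply V_B23; assumption | apply V_B31; assumption]]).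
  rewrite (HB X2 X3), (HB X3 X1) by auto. rewrite Cconj_Ci. reflexivity.
Qed.

Lemma ipL_up ip (Hip : is_inner_product_on_Vphys ip) l m n g :
  valid_idx l m n -> in_Vphys g ->
  ip (Fscal (RtoC (cp l m)) (Psi l (m + 1) n)) g = (RtoC (cp l m) * ip (Psi l (m + 1) n) g)%C.
Proof.
  intros [Hm Hn] Hg. destruct (Z.eq_dec m (Z.of_nat l)) as [->|H].
  - rewrite cp_top, Fscal0, ip_zero_l by auto. ring.
  - rewrite ip_scal_l by (auto; apply VPsi; split; lia). rewrite Cconj_RtoC. reflexivity.
Qed.

Lemma ipR_dn ip (Hip : is_inner_product_on_Vphys ip) l m n f :
  valid_idx l m n -> in_Vphys f ->
  ip f (Fscal (RtoC (cp l (m - 1))) (Psi l (m - 1) n)) = (RtoC (cp l (m - 1)) * ip f (Psi l (m - 1) n))%C.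
Proof.
  intros [Hm Hn] Hf. destruct (Z.eq_dec m (- Z.of_nat l)) as [->|H].
  - rewrite cp_bot, Fscal0, ip_zero_r by auto. ring.
  - rewrite ip_scal_r by (auto; apply VPsi; split; lia). reflexivity.
Qed.

Lemma ipL_upv ip (Hip : is_inner_product_on_Vphys ip) l m n g :
  valid_idx l m n -> in_Vphys g ->
  ip (Fscal (RtoC (cp l n)) (Psi l m (n + 1))) g = (RtoC (cp l n) * ip (Psi l m (n + 1)) g)%C.
Proof.
  intros [Hm Hn] Hg. destruct (Z.eq_dec n (Z.of_nat l)) as [->|H].
  - rewrite cp_top, Fscal0, ip_zero_l by auto. ring.
  - rewrite ip_scal_l by (auto; apply VPsi; split; lia). rewrite Cconj_RtoC. reflexivity.
Qed.

Lemma ipR_dnv ip (Hip : is_inner_product_on_Vphys ip) l m n f :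
  valid_idx l m n -> in_Vphys f ->
  ip f (Fscal (RtoC (cp l (n - 1))) (Psi l m (n - 1))) = (RtoC (cp l (n - 1)) * ip f (Psi l m (n - 1)))%C.
Proof.
  intros [Hm Hn] Hf. destruct (Z.eq_dec n (- Z.of_nat l)) as [->|H].
  - rewrite cp_bot, Fscal0, ip_zero_r by auto. ring.
  - rewrite ip_scal_r by (auto; apply VPsi; split; lia). reflexivity.
Qed.

Lemma ladderA ip (Hip : is_inner_product_on_Vphys ip)
  (HA : forall i j : ax, symmetric_on_Vphys ip (opA i j)) l m n l' m' n' :
  valid_idx l m n -> valid_idx l' m' n' ->
  (RtoC (cp l m) * ip (Psi l (m + 1) n) (Psi l' m' n'))%C =
  (RtoC (cp l' (m' - 1)) * ip (Psi l m n) (Psi l' (m' - 1) n'))%C.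
Proof.
  intros Va Vb. rewrite <- ipL_up, <- ipR_dn by (auto; apply VPsi; auto).
  rewrite <- LpA_Psi, <- LmA_Psi by auto. apply adjA; auto.
Qed.

Lemma ladderB ip (Hip : is_inner_product_on_Vphys ip)
  (HB : forall i j : ax, symmetric_on_Vphys ip (opB i j)) l m n l' m' n' :
  valid_idx l m n -> valid_idx l' m' n' ->
  (RtoC (cp l n) * ip (Psi l m (n + 1)) (Psi l' m' n'))%C =
  (RtoC (cp l' (n' - 1)) * ip (Psi l m n) (Psi l' m' (n' - 1)))%C.
Proof.
  intros Va Vb. rewrite <- ipL_upv, <- ipR_dnv by (auto; apply VPsi; auto).
  rewrite <- LpB_Psi, <- LmB_Psi by auto. apply adjB; auto.
Qed.

Lemma norm_step_m ip (Hip : is_inner_product_on_Vphys ip)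
  (HA : forall i j : ax, symmetric_on_Vphys ip (opA i j)) l m n :
  valid_idx l m n -> (m < Z.of_nat l)%Z ->
  ip (Psi l (m + 1) n) (Psi l (m + 1) n) = ip (Psi l m n) (Psi l m n).
Proof.
  intros [Hm Hn] Hl.
  assert (Vb : valid_idx l (m + 1) n) by (split; lia).
  pose proof (ladderA ip Hip HA l m n l (m + 1) n (conj Hm Hn) Vb) as E.
  replace (m + 1 - 1)%Z with m in E by lia.
  apply (C_cancel1 _ _ _ E). apply Rgt_not_eq, cp_pos. lia.
Qed.

Lemma norm_step_n ip (Hip : is_inner_product_on_Vphys ip)
  (HB : forall i j : ax, symmetric_on_Vphys ip (opB i j)) l m n :
  valid_idx l m n -> (n < Z.of_nat l)%Z ->
  ip (Psi l m (n + 1)) (Psi l m (n + 1)) = ip (Psi l m n) (Psi l m n).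
Proof.
  intros [Hm Hn] Hl.
  assert (Vb : valid_idx l m (n + 1)) by (split; lia).
  pose proof (ladderB ip Hip HB l m n l m (n + 1) (conj Hm Hn) Vb) as E.
  replace (n + 1 - 1)%Z with n in E by lia.
  apply (C_cancel1 _ _ _ E). apply Rgt_not_eq, cp_pos. lia.
Qed.

Lemma norm_top_m ip (Hip : is_inner_product_on_Vphys ip)
  (HA : forall i j : ax, symmetric_on_Vphys ip (opA i j)) l n :
  forall k m, (Z.of_nat l - m = Z.of_nat k)%Z -> valid_idx l m n ->
  ip (Psi l m n) (Psi l m n) = ip (Psi l (Z.of_nat l) n) (Psi l (Z.of_nat l) n).
Proof.
  induction k; intros m Hk V.
  - replace m with (Z.of_nat l) by lia. reflexivity.
  - destruct V as [Hm Hn].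
    rewrite <- (norm_step_m ip Hip HA l m n (conj Hm Hn)) by lia.
    apply IHk. lia. split; lia.
Qed.

Lemma norm_top_n ip (Hip : is_inner_product_on_Vphys ip)
  (HB : forall i j : ax, symmetric_on_Vphys ip (opB i j)) l m :
  forall k n, (Z.of_nat l - n = Z.of_nat k)%Z -> valid_idx l m n ->
  ip (Psi l m n) (Psi l m n) = ip (Psi l m (Z.of_nat l)) (Psi l m (Z.of_nat l)).
Proof.
  induction k; intros n Hk V.
  - replace n with (Z.of_nat l) by lia. reflexivity.
  - destruct V as [Hm Hn].
    rewrite <- (norm_step_n ip Hip HB l m n (conj Hm Hn)) by lia.
    apply IHk. lia. split; lia.
Qed.

Lemma norm_all ip (Hip : is_inner_product_on_Vphys ip)
  (HA : forall i j : ax, symmetric_on_Vphys ip (opA i j))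
  (HB : forall i j : ax, symmetric_on_Vphys ip (opB i j)) l m n :
  valid_idx l m n ->
  ip (Psi l m n) (Psi l m n) = ip (Psi l (Z.of_nat l) (Z.of_nat l)) (Psi l (Z.of_nat l) (Z.of_nat l)).
Proof.
  intros [Hm Hn].
  rewrite (norm_top_m ip Hip HA l n (Z.to_nat (Z.of_nat l - m)) m) by (try split; lia).
  apply (norm_top_n ip Hip HB l (Z.of_nat l) (Z.to_nat (Z.of_nat l - n)) n); [lia| split; lia].
Qed.

Lemma orth_l ip (Hip : is_inner_product_on_Vphys ip)
  (HA : forall i j : ax, symmetric_on_Vphys ip (opA i j)) l l' n :
  (l < l')%nat -> (Z.abs n <= Z.of_nat l)%Z ->
  forall k m, (m = Z.of_nat l - Z.of_nat k)%Z -> (Z.abs m <= Z.of_nat l)%Z ->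
  ip (Psi l m n) (Psi l' m n) = RtoC 0.
Proof.
  intros Hll Hn. induction k; intros m Hk Hm.
  - assert (Va : valid_idx l (Z.of_nat l) n) by (split; lia).
    assert (Vb : valid_idx l' (Z.of_nat l + 1) n) by (split; lia).
    pose proof (ladderA ip Hip HA l (Z.of_nat l) n l' (Z.of_nat l + 1) n Va Vb) as E.
    rewrite cp_top in E. replace (Z.of_nat l + 1 - 1)%Z with (Z.of_nat l) in E by lia.
    replace m with (Z.of_nat l) by lia.
    symmetry in E. apply (C_cancel (cp l' (Z.of_nat l)) 0 _). rewrite E. ring.
    apply Rgt_not_eq, cp_pos. lia.
  - assert (Va : valid_idx l m n) by (split; lia).
    assert (Vb : valid_idx l' (m + 1) n) by (split; lia).
    pose proof (ladderA ip Hip HA l m n l' (m + 1) n Va Vb) as E.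
    replace (m + 1 - 1)%Z with m in E by lia.
    rewrite (IHk (m + 1)%Z) in E by lia.
    apply (C_cancel (cp l' m) 0 _). rewrite <- E. ring.
    apply Rgt_not_eq, cp_pos. lia.
Qed.

Lemma orth_l' ip (Hip : is_inner_product_on_Vphys ip)
  (HA : forall i j : ax, symmetric_on_Vphys ip (opA i j)) l l' m n :
  (l < l')%nat -> valid_idx l m n -> ip (Psi l m n) (Psi l' m n) = RtoC 0.
Proof.
  intros H [Hm Hn]. apply (orth_l ip Hip HA l l' n H Hn (Z.to_nat (Z.of_nat l - m)) m); lia.
Qed.

Lemma KL0_pos l : 0 < KL 0 l.
Proof.
  rewrite KL_alt by lia. rewrite NK_sq by lia.
  pose proof PI_RGT_0. pose proof (pos_INR (l + 0)).
  pose proof (fact_pos (l + 0 - l)). pose proof (fact_pos (l + 0 + l)).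
  assert (0 < kap 0 l * kap 0 l).
  { assert (0 < kap 0 l).
    { unfold kap. pose proof (fact_pos (2 * l)). pose proof (fact_pos l).
      assert (0 < 2 ^ l) by (apply pow_lt; lra).
      apply Rdiv_lt_0_compat; [assumption| apply Rmult_lt_0_compat; assumption]. }
    apply Rmult_lt_0_compat; assumption. }
  apply Rmult_lt_0_compat; [|exact H3].
  apply Rmult_lt_0_compat; [apply Rmult_lt_0_compat|].
  - apply Rdiv_lt_0_compat; lra.
  - lra.
  - apply Rinv_0_lt_compat; lra.
Qed.

Lemma Psi000_nz : Psi 0 0 0 <> Fzero.
Proof.
  intros E. pose proof (f_equal (fun F => F ((0, 0), 0) ((0, 0), 0)) E) as E2. simpl in E2.
  pose proof (form_all 0 0 ((0, 0), 0) ((0, 0), 0) (le_0_n 2)) as F. simpl in F.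
  change (Z.of_nat 0) with 0%Z in F. rewrite F in E2. unfold Fzero, Sform, Gs, Ae, Wpow in E2.
  rewrite q3_0 in E2. rewrite Rmult_0_l, hb_0 in E2. simpl Defs.Cpow in E2.
  apply (f_equal fst) in E2. simpl in E2.
  pose proof (KL0_pos 0). unfold ab in E2. simpl in E2. lra.
Qed.

Lemma C33_rel ip (Hip : is_inner_product_on_Vphys ip)
  (HA : forall i j : ax, symmetric_on_Vphys ip (opA i j))
  (HC : forall i j : ax, symmetric_on_Vphys ip (opC i j)) l :
  ip (Psi (S l) (Z.of_nat l) (Z.of_nat l)) (Psi (S l) (Z.of_nat l) (Z.of_nat l)) =
  (RtoC ((2 * INR l + 3) / (2 * INR l + 1)) *
   ip (Psi l (Z.of_nat l) (Z.of_nat l)) (Psi l (Z.of_nat l) (Z.of_nat l)))%C.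
Proof.
  pose proof (Psi_form 0 l (le_0_n 2)) as F0. rewrite Nat.add_0_r in F0.
  pose proof (Psi_form 1 l ltac:(lia)) as F1. replace (l + 1)%nat with (S l) in F1 by lia.
  pose proof (Psi_form 2 l ltac:(lia)) as F2.
  assert (V0 : valid_idx l (Z.of_nat l) (Z.of_nat l)) by (split; lia).
  assert (V1 : valid_idx (S l) (Z.of_nat l) (Z.of_nat l)) by (split; lia).
  assert (V2 : valid_idx (l + 2) (Z.of_nat l) (Z.of_nat l)) by (split; lia).
  pose proof (HC X3 X3 _ _ (VPsi _ _ _ V0) (VPsi _ _ _ V1)) as E.
  rewrite F0, F1 in E. rewrite C33_1, C33_2 in E. rewrite <- F0, <- F1, <- F2 in E.
  rewrite (ip_scal_l ip Hip) in E by (apply VPsi; auto).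
  rewrite (ip_add_r ip Hip) in E by (try apply Vscal; apply VPsi; auto).
  rewrite (ip_scal_r ip Hip) in E by (apply VPsi; auto).
  rewrite (orth_l' ip Hip HA l (l + 2)) in E by (auto; lia).
  rewrite Cconj_RtoC in E.
  assert (0 <= INR l) by apply pos_INR.
  set (N1 := ip (Psi (S l) (Z.of_nat l) (Z.of_nat l)) (Psi (S l) (Z.of_nat l) (Z.of_nat l))) in *.
  set (N0 := ip (Psi l (Z.of_nat l) (Z.of_nat l)) (Psi l (Z.of_nat l) (Z.of_nat l))) in *.
  assert (E' : N0 = (RtoC ((2 * INR l + 1) / (2 * INR l + 3)) * N1)%C) by (rewrite E; ring).
  rewrite E'. destruct N1 as [a b].
  apply injective_projections; simpl; field; lra.
Qed.

Theorem mainTheorem7 (ip : PhysFun -> PhysFun -> C)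
  (Hip : is_inner_product_on_Vphys ip)
  (HA : forall i j : ax, symmetric_on_Vphys ip (opA i j))
  (HB : forall i j : ax, symmetric_on_Vphys ip (opB i j))
  (HC : forall i j : ax, symmetric_on_Vphys ip (opC i j)) :
  exists r : R, 0 < r /\
    forall (l : nat) (m n : Z) (l' : nat) (m' n' : Z),
      valid_idx l m n -> valid_idx l' m' n' ->
      ip (Psi l m n) (Psi l' m' n') =
      RtoC (if (Nat.eqb l l' && Z.eqb m m' && Z.eqb n n')%bool
            then r * (2 * INR l + 1) else 0).
Proof.
  assert (V000 : valid_idx 0 0 0) by (split; simpl; lia).
  pose proof Hip as Hip'. destruct Hip' as [_ [_ [_ H4]]].
  destruct (H4 _ (VPsi _ _ _ V000) Psi000_nz) as [Him Hre].
  set (N0 := ip (Psi 0 0 0) (Psi 0 0 0)) in *.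
  exists (Re N0). split; [exact Hre|].
  assert (Diag : forall l, ip (Psi l (Z.of_nat l) (Z.of_nat l)) (Psi l (Z.of_nat l) (Z.of_nat l))
                        = RtoC (Re N0 * (2 * INR l + 1))).
  { induction l.
    - change (Z.of_nat 0) with 0%Z. fold N0. destruct N0 as [a b]. simpl in *. subst.
      apply injective_projections; simpl; ring.
    - assert (V1 : valid_idx (S l) (Z.of_nat l) (Z.of_nat l)) by (split; lia).
      rewrite <- (norm_all ip Hip HA HB (S l) (Z.of_nat l) (Z.of_nat l) V1).
      rewrite (C33_rel ip Hip HA HC l). rewrite IHl.
      assert (0 <= INR l) by apply pos_INR.
      rewrite S_INR. apply injective_projections; simpl; field; lra. }
  intros l m n l' m' n' Va Vb.
  destruct (Nat.eqb l l' && Z.eqb m m' && Z.eqb n n')%bool eqn:Heq.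
  - apply andb_prop in Heq as [Heq Hn]. apply andb_prop in Heq as [Hl Hm].
    apply Nat.eqb_eq in Hl. apply Z.eqb_eq in Hm. apply Z.eqb_eq in Hn. subst.
    rewrite (norm_all ip Hip HA HB l' m' n' Va). apply Diag.
  - destruct (Z.eq_dec m m') as [<-|Hm].
    2:{ apply (orth_m ip Hip HA); auto. }
    destruct (Z.eq_dec n n') as [<-|Hn].
    2:{ apply (orth_n ip Hip HB); auto. }
    destruct (lt_eq_lt_dec l l') as [[Hlt|Heql]|Hgt].
    + apply (orth_l' ip Hip HA); auto.
    + subst. rewrite Nat.eqb_refl, !Z.eqb_refl in Heq. discriminate.
    + rewrite (ip_herm ip Hip) by (apply VPsi; auto).
      rewrite (orth_l' ip Hip HA l' l) by auto.
      apply injective_projections; simpl; ring.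
Qed.
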